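(* Let $M$ be the complete hyperbolic thrice-punctured sphere (unique up to isometry), with cusps $e_1,e_2,e_3$. Then the infimum $h''_{M,e_1}$ of the heights with respect to $e_1$ of the closed geodesics of $M$ is not attained by any closed geodesic, but it is attained by a simple geodesic line starting from (converging at one end to) $e_2$ and converging to $e_3$, i.e. this line has height $h''_{M,e_1}$.
   Context: For a cusp $e$ of a complete finite-area hyperbolic surface $M$, $\beta_e$ is its Busemann function normalized to be $0$ on the boundary of the maximal embedded horoball neighborhood of $e$ (precisely: $\beta_e=\beta_r-\eta_0$ where $\beta_r(x)=\lim_t(t-d_M(x,r(t)))$ for a minimizing ray $r$ going into $e$, and $\eta_0$ is the threshold above which the level sets of $\beta_r$ in the cusp lift to embedded horosphere quotients), increasing to $+\infty$ into $e$. The height with respect to $e$ of a closed subset $P$ disjoint from a neighborhood of $e$ is $\max_{x\in P}\beta_e(x)$. *)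

(* Defs.v *)
From Stdlib Require Import Reals ZArith.
From Coquelicot Require Import Coquelicot.
Open Scope R_scope.

(* Model: M = H^2 / Gamma(2), the complete hyperbolic thrice-punctured
   sphere, in the upper half-plane model.  Cusps: e1 = class of oo, e2 = class of 0,
   e3 = class of 1. *)

Definition pt := (R * R)%type.
Definition inH (p : pt) : Prop := 0 < snd p.

Definition arcosh (u : R) : R := ln (u + sqrt (u * u - 1)).
Definition dH (p q : pt) : R :=
  arcosh (1 + ((fst p - fst q) ^ 2 + (snd p - snd q) ^ 2)
              / (2 * snd p * snd q)).

(* integer 2x2 matrices (a, b, c, d) and their Moebius action
   z |-> (a z + b) / (c z + d) *)
Definition mat := (Z * Z * Z * Z)%type.
Definition ma (g : mat) : R := let '(a, _, _, _) := g in IZR a.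
Definition mb (g : mat) : R := let '(_, b, _, _) := g in IZR b.
Definition mc (g : mat) : R := let '(_, _, c, _) := g in IZR c.
Definition md (g : mat) : R := let '(_, _, _, d) := g in IZR d.

Definition act (g : mat) (p : pt) : pt :=
  let x := fst p in let y := snd p in
  let den := (mc g * x + md g) ^ 2 + (mc g * y) ^ 2 in
  (((ma g * x + mb g) * (mc g * x + md g) + ma g * mc g * y ^ 2) / den,
   y / den).

Definition Gamma2 (g : mat) : Prop :=
  let '(a, b, c, d) := g in
  (a * d - b * c = 1)%Z /\ Z.Odd a /\ Z.Even b /\ Z.Even c /\ Z.Odd d.

Definition dM (p q : pt) : R :=
  real (Glb_Rbar (fun r => exists g, Gamma2 g /\ r = dH p (act g q))).

(* a minimizing ray going into the cusp e1 (lifted: the vertical ray) *)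
Definition ray (t : R) : pt := (0, exp t).

Definition beta_r (p : pt) : R :=
  real (Lim (fun t => t - dM p (ray t)) p_infty).

(* the level set {beta = eta} of the cusp, lifted to the horocycle
   {Im z = e^eta} centred at oo, is an embedded horosphere quotient:
   the only elements of Gamma(2) bringing a point of the horocycle back
   to it are those fixing oo (c = 0). *)
Definition embedded_level (eta : R) : Prop :=
  forall g p, Gamma2 g -> inH p -> snd p = exp eta ->
    snd (act g p) = exp eta -> mc g = 0.

Definition eta0 : R :=
  real (Glb_Rbar (fun eta => forall eta', eta <= eta' -> embedded_level eta')).

Definition beta_e1 (p : pt) : R := beta_r p - eta0.

(* geodesic lines of H (unit speed, complete); they are exactly the lifts
   of the geodesic lines of M *)
Definition geodesic_line (c : R -> pt) : Prop :=
  (forall t, inH (c t)) /\ (forall s t, dH (c s) (c t) = Rabs (s - t)).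

Definition closed_geodesic (c : R -> pt) : Prop :=
  geodesic_line c /\
  exists T g, 0 < T /\ Gamma2 g /\ forall t, c (t + T) = act g (c t).

Definition simple_line (c : R -> pt) : Prop :=
  forall s t g, Gamma2 g -> c s = act g (c t) -> s = t.

Definition height_e1 (c : R -> pt) : R :=
  real (Lub_Rbar (fun h => exists t, h = beta_e1 (c t))).

Definition h2_M_e1 : R :=
  real (Glb_Rbar (fun h => exists c, closed_geodesic c /\ h = height_e1 c)).

Definition tends_to_bd (c : R -> pt) (l : Rbar) (xi : R) : Prop :=
  is_lim (fun t => fst (c t)) l xi /\ is_lim (fun t => snd (c t)) l 0.

(* c converges at l to the cusp e2 (Gamma(2)-orbit of 0) / e3 (orbit of 1) *)
Definition to_e2 (c : R -> pt) (l : Rbar) : Prop :=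
  exists g, Gamma2 g /\ tends_to_bd c l (mb g / md g).
Definition to_e3 (c : R -> pt) (l : Rbar) : Prop :=
  exists g, Gamma2 g /\ tends_to_bd c l ((ma g + mb g) / (mc g + md g)).

(* Main.v *)
Require Import Defs.
From Stdlib Require Import Reals ZArith Lra Lia Psatz Classical Znumtheory.
From Coquelicot Require Import Coquelicot.
Open Scope R_scope.

Definition rmat := (R * R * R * R)%type.
Definition mob (m : rmat) (p : pt) : pt :=
  let '(a, b, c, d) := m in
  let x := fst p in let y := snd p in
  let den := (c * x + d) ^ 2 + (c * y) ^ 2 in
  (((a * x + b) * (c * x + d) + a * c * y ^ 2) / den, y / den).
Definition rdet (m : rmat) : R := let '(a, b, c, d) := m in a * d - b * c.
Definition rmul (m n : rmat) : rmat :=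
  let '(a, b, c, d) := m in let '(a', b', c', d') := n in
  (a * a' + b * c', a * b' + b * d', c * a' + d * c', c * b' + d * d').
Definition toR (g : mat) : rmat := (ma g, mb g, mc g, md g).

Lemma act_mob g p : act g p = mob (toR g) p.
Proof. destruct g as [[[a b] c] d]; reflexivity. Qed.

Lemma den_pos c d x y : 0 < y -> (c <> 0 \/ d <> 0) -> 0 < (c * x + d) ^ 2 + (c * y) ^ 2.
Proof.
  intros Hy H. destruct (Req_dec c 0) as [->|Hc].
  - destruct H as [H|H]; [lra|]. pose proof (Rsqr_pos_lt d H) as H'. unfold Rsqr in H'. replace ((0*x+d)^2 + (0*y)^2) with (d*d) by ring. lra.
  - pose proof (Rsqr_pos_lt c Hc) as H'. unfold Rsqr in H'. assert (0 < c*c*(y*y)) by (apply Rmult_lt_0_compat; nra).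
    assert (0 <= (c*x+d)^2) by (apply pow2_ge_0). replace ((c*y)^2) with (c*c*(y*y)) by ring. lra.
Qed.

Lemma det1_nz a b c d : a * d - b * c = 1 -> c <> 0 \/ d <> 0.
Proof. intros H. destruct (Req_dec c 0); [right; intro; subst; nra| left; auto]. Qed.

Lemma mob_inH m p : rdet m = 1 -> inH p -> inH (mob m p).
Proof.
  destruct m as [[[a b] c] d]; destruct p as [x y]; unfold inH, rdet, mob; cbn [fst snd].
  intros Hd Hy. apply Rdiv_lt_0_compat; auto. apply den_pos; auto. eapply det1_nz; eauto.
Qed.

Lemma ratio_inv a b c d x1 y1 x2 y2 :
  a * d - b * c = 1 -> 0 < y1 -> 0 < y2 ->
  let D1 := (c * x1 + d) ^ 2 + (c * y1) ^ 2 in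
  let D2 := (c * x2 + d) ^ 2 + (c * y2) ^ 2 in
  (((a * x1 + b) * (c * x1 + d) + a * c * y1 ^ 2) / D1 -
   ((a * x2 + b) * (c * x2 + d) + a * c * y2 ^ 2) / D2) ^ 2 + (y1 / D1 - y2 / D2) ^ 2
  = ((x1 - x2) ^ 2 + (y1 - y2) ^ 2) / (D1 * D2).
Proof.
  intros Hd Hy1 Hy2 D1 D2.
  assert (H1 : 0 < D1) by (apply den_pos; auto; eapply det1_nz; eauto).
  assert (H2 : 0 < D2) by (apply den_pos; auto; eapply det1_nz; eauto).
  replace (y1 / D1) with ((a*d-b*c) * y1 / D1) by (rewrite Hd; field; lra).
  replace (y2 / D2) with ((a*d-b*c) * y2 / D2) by (rewrite Hd; field; lra).
  replace ((x1 - x2) ^ 2 + (y1 - y2) ^ 2) with ((a*d-b*c)^2 * ((x1 - x2) ^ 2 + (y1 - y2) ^ 2)) by (rewrite Hd; ring).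
  unfold D1, D2 in *. field. lra.
Qed.

Lemma dH_mob m p q : rdet m = 1 -> inH p -> inH q -> dH (mob m p) (mob m q) = dH p q.
Proof.
  destruct m as [[[a b] c] d]; destruct p as [x1 y1]; destruct q as [x2 y2]; unfold inH, rdet, dH, mob; cbn [fst snd].
  intros Hd Hy1 Hy2. f_equal. f_equal.
  assert (H1 : 0 < (c * x1 + d) ^ 2 + (c * y1) ^ 2) by (apply den_pos; auto; eapply det1_nz; eauto).
  assert (H2 : 0 < (c * x2 + d) ^ 2 + (c * y2) ^ 2) by (apply den_pos; auto; eapply det1_nz; eauto).
  rewrite (ratio_inv a b c d x1 y1 x2 y2 Hd Hy1 Hy2). field. repeat split; lra.
Qed.

Definition tmob (m : rmat) (p : pt) : pt :=
  let '(a, b, c, d) := m in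
  let x := fst p in let y := snd p in
  let den := (c * x + d) ^ 2 + (c * y) ^ 2 in
  (((a * x + b) * (c * x + d) + a * c * y ^ 2) / den, (a * d - b * c) * y / den).

Lemma tmob_mob m p : rdet m = 1 -> tmob m p = mob m p.
Proof. destruct m as [[[a b] c] d]; unfold rdet, tmob, mob; intros H; rewrite H, Rmult_1_l; reflexivity. Qed.

Lemma mob_comp m n p : rdet m = 1 -> rdet n = 1 -> inH p -> mob (rmul m n) p = mob m (mob n p).
Proof.
  intros Hm Hn Hp.
  assert (Hmn : rdet (rmul m n) = 1).
  { destruct m as [[[a b] c] d]; destruct n as [[[a' b'] c'] d']; unfold rdet, rmul in *.
    replace ((a * a' + b * c') * (c * b' + d * d') - (a * b' + b * d') * (c * a' + d * c')) with ((a*d-b*c)*(a'*d'-b'*c')) by ring.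
    rewrite Hm, Hn; ring. }
  pose proof (mob_inH n p Hn Hp) as Hq.
  assert (Hq' := Hq). 
  rewrite <- (tmob_mob _ _ Hmn), <- (tmob_mob _ _ Hm), <- (tmob_mob _ _ Hn).
  rewrite <- (tmob_mob _ _ Hn) in Hq'.
  destruct m as [[[a b] c] d]; destruct n as [[[a' b'] c'] d']; destruct p as [x y]; unfold inH, rdet, tmob, rmul in *; cbn [fst snd] in *.
  assert (H2 : 0 < (c' * x + d') ^ 2 + (c' * y) ^ 2) by (apply den_pos; auto; eapply det1_nz; eauto).
  assert (H3 : 0 < ((c * a' + d * c') * x + (c * b' + d * d')) ^ 2 + ((c * a' + d * c') * y) ^ 2).
  { apply den_pos; auto. eapply det1_nz. exact Hmn. }
  set (D' := (c' * x + d') ^ 2 + (c' * y) ^ 2) in *.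
  set (X := ((a' * x + b') * (c' * x + d') + a' * c' * y ^ 2) / D') in *.
  set (Y := (a' * d' - b' * c') * y / D') in *.
  assert (H1 : 0 < (c * X + d) ^ 2 + (c * Y) ^ 2) by (apply den_pos; auto; eapply det1_nz; eauto).
  assert (E : (c * X + d) ^ 2 + (c * Y) ^ 2 = (((c * a' + d * c') * x + (c * b' + d * d')) ^ 2 + ((c * a' + d * c') * y) ^ 2) / D').
  { unfold X, Y, D'. field. unfold D' in *; lra. }
  rewrite E. unfold X, Y, D'. f_equal; field; repeat split; unfold D' in *; try lra.
Qed.

Definition ch (x : R) := (exp x + exp (- x)) / 2.

Lemma ln_le' x y : 0 < x -> x <= y -> ln x <= ln y.
Proof. intros Hx [H|H]; [left; apply ln_increasing; auto| subst; lra]. Qed.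
Lemma exp_le' x y : x <= y -> exp x <= exp y.
Proof. intros [H|H]; [left; apply exp_increasing; auto| subst; lra]. Qed.

Lemma exp_neg_mul x : exp x * exp (- x) = 1.
Proof. rewrite <- exp_plus. replace (x + - x) with 0 by ring. apply exp_0. Qed.

Lemma arcosh_ch x : arcosh (ch x) = Rabs x.
Proof.
  unfold arcosh, ch. pose proof (exp_pos x). pose proof (exp_pos (-x)). pose proof (exp_neg_mul x).
  replace ((exp x + exp (- x)) / 2 * ((exp x + exp (- x)) / 2) - 1) with (((exp x - exp (-x))/2)^2).
  2:{ assert (G : forall A B, A*B = 1 -> (A+B)/2*((A+B)/2) - 1 = ((A-B)/2)^2) by (intros A B HAB; rewrite <- HAB; field). symmetry; apply G; auto. }
  destruct (Rle_or_lt 0 x) as [Hx|Hx].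
  - assert (exp (-x) <= exp x) by (apply exp_le'; lra).
    rewrite sqrt_pow2 by lra. rewrite Rabs_right by lra. replace ((exp x + exp (- x)) / 2 + (exp x - exp (- x)) / 2) with (exp x) by field. apply ln_exp.
  - assert (exp x <= exp (-x)) by (apply exp_le'; lra).
    replace (((exp x - exp (- x)) / 2) ^ 2) with (((exp (-x) - exp x) / 2) ^ 2) by field.
    rewrite sqrt_pow2 by lra. rewrite Rabs_left by lra. replace ((exp x + exp (- x)) / 2 + (exp (-x) - exp x) / 2) with (exp (-x)) by field. apply ln_exp.
Qed.

Lemma arcosh_inv X s : 1 <= X -> arcosh X = s -> X = ch s.
Proof.
  unfold arcosh, ch. intros HX Hs.
  assert (HS := sqrt_sqrt (X * X - 1)). assert (HS0 := sqrt_pos (X * X - 1)).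
  set (S := sqrt (X * X - 1)) in *.
  assert (Hp : 0 < X + S) by lra.
  assert (E1 : exp s = X + S) by (rewrite <- Hs; apply exp_ln; auto).
  assert (E2 : exp (- s) = X - S).
  { rewrite exp_Ropp, E1. field_simplify_eq; [nra | lra]. }
  rewrite E1, E2; field.
Qed.

Lemma arcosh_mono X Y : 1 <= X -> X <= Y -> arcosh X <= arcosh Y.
Proof.
  unfold arcosh; intros HX HXY. apply ln_le'.
  - pose proof (sqrt_pos (X*X-1)); lra.
  - apply Rplus_le_compat; auto. apply sqrt_le_1_alt. nra.
Qed.

Lemma arcosh_nonneg X : 1 <= X -> 0 <= arcosh X.
Proof.
  intros HX. replace 0 with (arcosh (ch 0)). apply arcosh_mono; unfold ch; rewrite Ropp_0, exp_0; lra.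
  rewrite arcosh_ch, Rabs_R0; auto.
Qed.

Lemma arcosh_le_ln X : 1 <= X -> arcosh X <= ln (2 * X).
Proof.
  unfold arcosh; intros HX. apply ln_le'.
  - pose proof (sqrt_pos (X*X-1)); lra.
  - assert (sqrt (X*X-1) <= X). { assert (H : sqrt (X*X-1) <= sqrt (X*X)) by (apply sqrt_le_1_alt; lra). rewrite sqrt_square in H by lra. exact H. } lra.
Qed.

Lemma ch_ge1 x : 1 <= ch x.
Proof.
  unfold ch. pose proof (exp_pos x). pose proof (exp_pos (-x)). pose proof (exp_neg_mul x).
  assert (0 <= (exp x - exp (-x))^2) by apply pow2_ge_0.
  assert (2 <= exp x + exp (-x)) by nra. lra.
Qed.

Lemma dH_arg_ge1 p q : inH p -> inH q -> 1 <= 1 + ((fst p - fst q) ^ 2 + (snd p - snd q) ^ 2) / (2 * snd p * snd q).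
Proof.
  unfold inH; intros Hp Hq. assert (0 <= ((fst p - fst q) ^ 2 + (snd p - snd q) ^ 2) / (2 * snd p * snd q)).
  { apply Rdiv_le_0_compat. apply Rplus_le_le_0_compat; apply pow2_ge_0. nra. } lra.
Qed.

Lemma dH_nonneg p q : inH p -> inH q -> 0 <= dH p q.
Proof. intros; unfold dH; apply arcosh_nonneg, dH_arg_ge1; auto. Qed.

Lemma dH_vert s t : dH (0, exp s) (0, exp t) = Rabs (s - t).
Proof.
  unfold dH; cbn [fst snd]. rewrite <- arcosh_ch. f_equal. unfold ch.
  rewrite Ropp_minus_distr. unfold Rminus. rewrite !exp_plus, !exp_Ropp.
  pose proof (exp_pos s); pose proof (exp_pos t). field. lra.
Qed.

Lemma dH_ray_lower z t : inH z -> t - ln (snd z) <= dH z (ray t).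
Proof.
  destruct z as [x y]; unfold inH, ray, dH; cbn [fst snd]; intros Hy.
  pose proof (exp_pos t) as He.
  apply Rle_trans with (arcosh (ch (t - ln y))).
  - rewrite arcosh_ch. apply Rle_abs.
  - apply arcosh_mono. apply ch_ge1.
    assert (E1 : exp (t - ln y) = exp t * / y) by (unfold Rminus; rewrite exp_plus, exp_Ropp, exp_ln; auto).
    assert (E2 : exp (- (t - ln y)) = / exp t * y) by (rewrite Ropp_minus_distr; unfold Rminus; rewrite exp_plus, exp_Ropp, exp_ln; auto; ring).
    unfold ch. rewrite E1, E2.
    replace (1 + ((x - 0) ^ 2 + (y - exp t) ^ 2) / (2 * y * exp t)) with ((exp t * / y + / exp t * y) / 2 + x^2/(2*y*exp t)) by (field; lra).
    assert (0 <= x^2/(2*y*exp t)) by (apply Rdiv_le_0_compat; [apply pow2_ge_0| nra]). lra.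
Qed.

Lemma ln_1p_le a : 0 <= a -> ln (1 + a) <= a.
Proof.
  intros Ha. rewrite <- (ln_exp a) at 2. apply ln_le'. lra. apply exp_ineq1_le.
Qed.

Lemma dH_ray_upper z t : inH z ->
  dH z (ray t) <= t - ln (snd z) + ((fst z)^2 + (snd z)^2) * exp (- (2 * t)).
Proof.
  destruct z as [x y]; unfold inH, ray; cbn [fst snd]; intros Hy.
  pose proof (exp_pos t) as He. pose proof (exp_pos (-(2*t))) as He2.
  assert (HK : 0 <= (x^2 + y^2) * exp (-(2*t))) by (apply Rmult_le_pos; [apply Rplus_le_le_0_compat; apply pow2_ge_0| lra]).
  unfold dH; cbn [fst snd].
  eapply Rle_trans. apply arcosh_le_ln. apply (dH_arg_ge1 (x,y) (0, exp t)); unfold inH; simpl; lra.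
  replace (2 * (1 + ((x - 0) ^ 2 + (y - exp t) ^ 2) / (2 * y * exp t))) with (exp t * / y * (1 + (x^2 + y^2) * exp (-(2*t)))).
  2:{ replace (exp (-(2*t))) with (/ (exp t * exp t)). field; lra. rewrite <- exp_plus, <- exp_Ropp. f_equal; ring. }
  assert (Hyi : 0 < / y) by (apply Rinv_0_lt_compat; lra).
  rewrite (ln_mult (exp t * / y)); [| apply Rmult_lt_0_compat; lra | lra].
  rewrite (ln_mult (exp t)), ln_exp, ln_Rinv; try lra.
  pose proof (ln_1p_le _ HK). lra.
Qed.

Definition gid : mat := (1%Z, 0%Z, 0%Z, 1%Z).
Lemma Gamma2_id : Gamma2 gid.
Proof. unfold Gamma2, gid. repeat split. exists 0%Z; lia. exists 0%Z; lia. exists 0%Z; lia. exists 0%Z; lia. Qed.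

Definition ginv (g : mat) : mat := let '(a, b, c, d) := g in (d, (- b)%Z, (- c)%Z, a).

Lemma Gamma2_inv g : Gamma2 g -> Gamma2 (ginv g).
Proof.
  destruct g as [[[a b] c] d]; unfold Gamma2, ginv. intros [H1 [H2 [H3 [H4 H5]]]].
  repeat split; auto; try lia.
  destruct H3 as [k Hk]; exists (-k)%Z; lia. destruct H4 as [k Hk]; exists (-k)%Z; lia.
Qed.

Lemma ginv_inv g : ginv (ginv g) = g.
Proof. destruct g as [[[a b] c] d]; unfold ginv; simpl; rewrite !Z.opp_involutive; reflexivity. Qed.

Lemma rdet_toR g : Gamma2 g -> rdet (toR g) = 1.
Proof.
  destruct g as [[[a b] c] d]; unfold Gamma2, rdet, toR, ma, mb, mc, md. intros [H _].
  rewrite <- !mult_IZR, <- minus_IZR, H. reflexivity.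
Qed.

Lemma mob_id p : inH p -> mob (1, 0, 0, 1) p = p.
Proof. destruct p as [x y]; unfold mob, inH; cbn [fst snd]; intros; f_equal; field. Qed.

Lemma act_inv_l g p : Gamma2 g -> inH p -> act (ginv g) (act g p) = p.
Proof.
  intros Hg Hp. rewrite !act_mob. rewrite <- mob_comp; try apply rdet_toR; auto using Gamma2_inv.
  replace (rmul (toR (ginv g)) (toR g)) with ((1,0,0,1) : rmat). apply mob_id; auto.
  pose proof (rdet_toR g Hg) as H.
  destruct g as [[[a b] c] d]; unfold toR, ginv, rmul, rdet, ma, mb, mc, md in *. rewrite !opp_IZR.
  f_equal; [f_equal; [f_equal|]|]; lra.
Qed.

Lemma act_inH g p : Gamma2 g -> inH p -> inH (act g p).
Proof. intros; rewrite act_mob; apply mob_inH; auto; apply rdet_toR; auto. Qed.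

Lemma dH_act g p q : Gamma2 g -> inH p -> inH q -> dH (act g p) (act g q) = dH p q.
Proof. intros; rewrite !act_mob; apply dH_mob; auto; apply rdet_toR; auto. Qed.

Lemma dH_act_swap g p q : Gamma2 g -> inH p -> inH q -> dH p (act g q) = dH (act (ginv g) p) q.
Proof.
  intros Hg Hp Hq. rewrite <- (dH_act (ginv g)); auto using Gamma2_inv, act_inH.
  rewrite act_inv_l; auto.
Qed.

Lemma glb_fin (E : R -> Prop) m e : E e -> (forall x, E x -> m <= x) ->
  m <= real (Glb_Rbar E) /\ real (Glb_Rbar E) <= e /\ Glb_Rbar E = Finite (real (Glb_Rbar E)).
Proof.
  intros He Hm. destruct (Glb_Rbar_correct E) as [H1 H2].
  assert (A1 : Rbar_le m (Glb_Rbar E)) by (apply H2; intros x Hx; simpl; apply Hm; auto).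
  assert (A2 : Rbar_le (Glb_Rbar E) e) by (apply H1; auto).
  destruct (Glb_Rbar E); simpl in *; try contradiction. auto.
Qed.

Lemma lub_fin (E : R -> Prop) M e : E e -> (forall x, E x -> x <= M) ->
  e <= real (Lub_Rbar E) /\ real (Lub_Rbar E) <= M /\ Lub_Rbar E = Finite (real (Lub_Rbar E)).
Proof.
  intros He Hm. destruct (Lub_Rbar_correct E) as [H1 H2].
  assert (A1 : Rbar_le (Lub_Rbar E) M) by (apply H2; intros x Hx; simpl; apply Hm; auto).
  assert (A2 : Rbar_le e (Lub_Rbar E)) by (apply H1; auto).
  destruct (Lub_Rbar E); simpl in *; try contradiction. auto.
Qed.

Lemma dM_le p q g : inH p -> inH q -> Gamma2 g -> dM p q <= dH p (act g q).
Proof.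
  intros Hp Hq Hg. unfold dM.
  destruct (glb_fin (fun r => exists g, Gamma2 g /\ r = dH p (act g q)) 0 (dH p (act g q))) as [_ [H _]]; auto.
  exists g; auto. intros x [g' [Hg' ->]]. apply dH_nonneg; auto using act_inH.
Qed.

Lemma dM_ge p q L : inH p -> inH q -> (forall g, Gamma2 g -> L <= dH p (act g q)) -> L <= dM p q.
Proof.
  intros Hp Hq HL. unfold dM.
  destruct (Glb_Rbar_correct (fun r => exists g, Gamma2 g /\ r = dH p (act g q))) as [H1 H2].
  destruct (glb_fin (fun r => exists g, Gamma2 g /\ r = dH p (act g q)) 0 (dH p (act gid q))) as [_ [_ HF]]; auto.
  exists gid; split; auto using Gamma2_id. intros x [g' [Hg' ->]]. apply dH_nonneg; auto using act_inH.
  assert (A : Rbar_le L (Glb_Rbar (fun r => exists g, Gamma2 g /\ r = dH p (act g q)))).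
  { apply H2. intros x [g' [Hg' ->]]. simpl. apply HL; auto. }
  rewrite HF in A. simpl in A. auto.
Qed.

Lemma sq_IZR_ge4 c : Z.Even c -> c <> 0%Z -> 4 <= IZR c * IZR c.
Proof.
  intros [k Hk] Hc. rewrite <- mult_IZR. apply IZR_le. subst. nia.
Qed.

Lemma orbit_bound g p : Gamma2 g -> inH p -> snd (act g p) <= snd p + / (4 * snd p).
Proof.
  intros Hg Hp. pose proof Hg as Hg'. destruct g as [[[a b] c] d]; destruct p as [x y]; unfold inH, act, Gamma2, ma, mb, mc, md in *; cbn [fst snd] in *.
  destruct Hg as [Hdet [_ [_ [Hc _]]]].
  assert (Hyi : 0 < / (4 * y)) by (apply Rinv_0_lt_compat; lra).
  destruct (Z.eq_dec c 0) as [->|Hc0].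
  - assert (Hd : (a * d = 1)%Z) by lia. apply Z.mul_eq_1 in Hd as Hd'.
    assert (IZR d * IZR d = 1). { rewrite Z.mul_comm in Hd. apply Z.mul_eq_1 in Hd. destruct Hd as [->| ->]; simpl; lra. }
    replace ((0 * x + IZR d) ^ 2 + (0 * y) ^ 2) with 1 by (simpl; lra). lra.
  - pose proof (sq_IZR_ge4 c Hc Hc0) as H4.
    assert (Hden : 4 * (y * y) <= (IZR c * x + IZR d) ^ 2 + (IZR c * y) ^ 2).
    { assert (0 <= (IZR c * x + IZR d) ^ 2) by apply pow2_ge_0. replace ((IZR c * y)^2) with (IZR c * IZR c * (y*y)) by ring. nra. }
    apply Rle_trans with (/ (4 * y)); [|lra].
    apply Rle_trans with (y / (4 * (y*y))).
    + apply Rmult_le_compat_l; [lra|]. apply Rinv_le_contravar; auto. nra.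
    + right; field; lra.
Qed.

Lemma exp_geom n : exp (- (2 * INR n)) = exp (-2) ^ n.
Proof.
  induction n.
  - replace (-(2 * INR 0)) with 0 by (simpl; ring). rewrite exp_0. simpl; auto.
  - rewrite S_INR. rewrite <- tech_pow_Rmult. rewrite <- IHn, <- exp_plus. f_equal; ring.
Qed.

Lemma lim_lower L K : is_lim_seq (fun n => L - K * exp (- (2 * INR n))) L.
Proof.
  assert (H : is_lim_seq (fun n => K * exp (- (2 * INR n))) 0).
  { apply is_lim_seq_ext with (fun n => K * exp (-2) ^ n). intros; rewrite exp_geom; auto.
    replace (Finite 0) with (Rbar_mult K 0) by (simpl; f_equal; ring). apply is_lim_seq_scal_l.
    apply is_lim_seq_geom. rewrite Rabs_right. 2: left; apply exp_pos.
    rewrite <- exp_0. apply exp_increasing. lra. }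
  pose proof (is_lim_seq_minus' _ _ L 0 (is_lim_seq_const L) H) as H'.
  rewrite Rminus_0_r in H'. exact H'.
Qed.

Lemma real_lim_bounds (u l : nat -> R) (L U : R) : (forall n, l n <= u n) -> (forall n, u n <= U) ->
  is_lim_seq l L -> L <= real (Lim_seq u) <= U.
Proof.
  intros H1 H2 H3.
  assert (A1 : Rbar_le (Lim_seq l) (Lim_seq u)) by (apply Lim_seq_le_loc; exists 0%nat; auto).
  assert (A2 : Rbar_le (Lim_seq u) (Lim_seq (fun _ => U))) by (apply Lim_seq_le_loc; exists 0%nat; auto).
  rewrite Lim_seq_const in A2. rewrite (is_lim_seq_unique _ _ H3) in A1.
  destruct (Lim_seq u); simpl in *; try contradiction. lra.
Qed.

Lemma ray_inH t : inH (ray t).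
Proof. unfold inH, ray; simpl; apply exp_pos. Qed.

Lemma busemann_seq_lower p g n : inH p -> Gamma2 g ->
  ln (snd (act g p)) - ((fst (act g p))^2 + (snd (act g p))^2) * exp (- (2 * INR n)) <= INR n - dM p (ray (INR n)).
Proof.
  intros Hp Hg.
  pose proof (dM_le p (ray (INR n)) (ginv g) Hp (ray_inH _) (Gamma2_inv g Hg)) as H1.
  rewrite dH_act_swap, ginv_inv in H1; auto using Gamma2_inv, ray_inH.
  pose proof (dH_ray_upper (act g p) (INR n) (act_inH g p Hg Hp)). lra.
Qed.

Lemma busemann_seq_upper p B n : inH p -> 0 < B -> (forall h, Gamma2 h -> snd (act h p) <= B) ->
  INR n - dM p (ray (INR n)) <= ln B.
Proof.
  intros Hp HB Hh.
  assert (INR n - ln B <= dM p (ray (INR n))); [|lra].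
  apply dM_ge; auto using ray_inH. intros h Hh'.
  rewrite dH_act_swap; auto using ray_inH.
  pose proof (dH_ray_lower (act (ginv h) p) (INR n) (act_inH _ _ (Gamma2_inv h Hh') Hp)).
  assert (ln (snd (act (ginv h) p)) <= ln B).
  { apply ln_le'. apply (act_inH _ _ (Gamma2_inv h Hh') Hp). apply Hh; apply Gamma2_inv; auto. }
  lra.
Qed.

Lemma beta_r_eq p : beta_r p = real (Lim_seq (fun n => INR n - dM p (ray (INR n)))).
Proof. reflexivity. Qed.

Lemma beta_r_bounds p g B : inH p -> Gamma2 g -> 0 < B -> (forall h, Gamma2 h -> snd (act h p) <= B) ->
  ln (snd (act g p)) <= beta_r p <= ln B.
Proof.
  intros Hp Hg HB Hh. rewrite beta_r_eq.
  apply real_lim_bounds with (l := fun n => ln (snd (act g p)) - ((fst (act g p))^2 + (snd (act g p))^2) * exp (- (2 * INR n))).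
  - intros; apply busemann_seq_lower; auto.
  - intros; apply busemann_seq_upper; auto.
  - apply lim_lower.
Qed.

Lemma beta_r_ge p g : inH p -> Gamma2 g -> ln (snd (act g p)) <= beta_r p.
Proof.
  intros Hp Hg. assert (Hy : 0 < snd p) by exact Hp.
  apply (beta_r_bounds p g (snd p + / (4 * snd p))); auto.
  assert (0 < / (4 * snd p)) by (apply Rinv_0_lt_compat; lra). lra.
  intros; apply orbit_bound; auto.
Qed.

Lemma beta_r_le p B : inH p -> 0 < B -> (forall h, Gamma2 h -> snd (act h p) <= B) -> beta_r p <= ln B.
Proof. intros Hp HB Hh. apply (beta_r_bounds p gid B); auto using Gamma2_id. Qed.

Lemma exp_mln2 : exp (- ln 2) = / 2.
Proof. rewrite exp_Ropp, exp_ln; lra. Qed.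

Lemma embedded_gt eta : - ln 2 < eta -> embedded_level eta.
Proof.
  intros Heta g p Hg Hp Hy Hy'.
  assert (He : / 2 < exp eta) by (rewrite <- exp_mln2; apply exp_increasing; auto).
  destruct g as [[[a b] c] d]; destruct p as [x y]; unfold inH, act, Gamma2, ma, mb, mc, md in *; cbn [fst snd] in *.
  destruct Hg as [Hdet [_ [_ [Hc _]]]].
  destruct (Z.eq_dec c 0) as [->|Hc0]; [reflexivity|]. exfalso.
  pose proof (sq_IZR_ge4 c Hc Hc0) as H4.
  set (D := (IZR c * x + IZR d) ^ 2 + (IZR c * y) ^ 2) in *.
  assert (Hden : 4 * (y * y) <= D).
  { unfold D. assert (0 <= (IZR c * x + IZR d) ^ 2) by apply pow2_ge_0. replace ((IZR c * y)^2) with (IZR c * IZR c * (y*y)) by ring. nra. }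
  assert (HD : 0 < D) by nra.
  rewrite <- Hy in He. rewrite <- Hy in Hy'.
  assert (H : y / D * D = y * D) by (rewrite Hy'; auto).
  replace (y / D * D) with y in H by (field; lra).
  assert (D = 1) by nra. nra.
Qed.

Lemma not_embedded : ~ embedded_level (- ln 2).
Proof.
  intros H.
  assert (Hg : Gamma2 (1%Z, 0%Z, 2%Z, 1%Z)).
  { unfold Gamma2. repeat split. exists 0%Z; lia. exists 0%Z; lia. exists 1%Z; lia. exists 0%Z; lia. }
  specialize (H _ (- / 2, / 2) Hg). unfold inH, act, mc, ma, mb, md in H; cbn [fst snd] in H.
  rewrite exp_mln2 in H.
  assert (IZR 2 = 0) by (apply H; [lra| reflexivity| field]). lra.
Qed.

Lemma eta0_val : eta0 = - ln 2.
Proof.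
  unfold eta0.
  assert (HE : forall eta, (forall eta', eta <= eta' -> embedded_level eta') <-> - ln 2 < eta).
  { intros eta; split.
    - intros H. destruct (Rlt_or_le (- ln 2) eta) as [h|h]; auto. exfalso. apply not_embedded, H; auto.
    - intros h eta' h'. apply embedded_gt. lra. }
  rewrite (is_glb_Rbar_unique _ (Finite (- ln 2))); auto.
  split.
  - intros x Hx. apply HE in Hx. simpl; lra.
  - intros b Hb. destruct b as [b| |]; simpl; auto.
    + destruct (Rle_or_lt b (- ln 2)) as [h|h]; auto.
      assert (Hm : (fun eta => forall eta', eta <= eta' -> embedded_level eta') ((b + - ln 2)/2)) by (apply HE; lra).
      specialize (Hb _ Hm). simpl in Hb. lra.
    + assert (Hm : (fun eta => forall eta', eta <= eta' -> embedded_level eta') 0).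
      { apply HE. pose proof ln_lt_2. lra. }
      specialize (Hb _ Hm). simpl in Hb. auto.
Qed.

Lemma beta_e1_ge p g : inH p -> Gamma2 g -> ln (2 * snd (act g p)) <= beta_e1 p.
Proof.
  intros Hp Hg. unfold beta_e1. rewrite eta0_val. pose proof (beta_r_ge p g Hp Hg).
  rewrite ln_mult; [lra | lra | apply act_inH; auto].
Qed.

Lemma beta_e1_le p B : inH p -> 0 < B -> (forall h, Gamma2 h -> snd (act h p) <= B) -> beta_e1 p <= ln (2 * B).
Proof.
  intros Hp HB Hh. unfold beta_e1. rewrite eta0_val. pose proof (beta_r_le p B Hp HB Hh).
  rewrite ln_mult; lra.
Qed.

Lemma height_bounds c L U t0 : (forall t, beta_e1 (c t) <= U) -> L <= beta_e1 (c t0) ->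
  L <= height_e1 c <= U.
Proof.
  intros HU HL. unfold height_e1.
  destruct (lub_fin (fun h => exists t, h = beta_e1 (c t)) U (beta_e1 (c t0))) as [H1 [H2 _]].
  exists t0; auto. intros x [t ->]; auto. lra.
Qed.

Definition curve (M : rmat) (t : R) : pt := mob M (0, exp t).

Lemma curve_inH M t : rdet M = 1 -> inH (curve M t).
Proof. intros; apply mob_inH; auto; apply ray_inH. Qed.

Lemma curve_geodesic M : rdet M = 1 -> geodesic_line (curve M).
Proof.
  intros HM; split. intros; apply curve_inH; auto.
  intros s t. unfold curve. rewrite dH_mob; auto using ray_inH. apply dH_vert.
  apply (ray_inH s). apply (ray_inH t).
Qed.

Definition Qf (M : rmat) (c d : R) : R :=
  let '(p, q, r, s) := M in (c * p + d * r) * (c * q + d * s).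

Lemma act_curve g M t : Gamma2 g -> rdet M = 1 -> act g (curve M t) = mob (rmul (toR g) M) (0, exp t).
Proof. intros; unfold curve; rewrite act_mob, mob_comp; auto using rdet_toR. apply (ray_inH t). Qed.

Lemma Im_vert (N : rmat) y : snd (mob N (0, y)) = let '(_, _, r, s) := N in y / (s ^ 2 + (r * y) ^ 2).
Proof. destruct N as [[[p q] r] s]; unfold mob; cbn [fst snd]. f_equal. ring. Qed.

Lemma amgm_bound r s y : 0 < y -> (r <> 0 \/ s <> 0) -> y / (s ^ 2 + (r * y) ^ 2) * (2 * Rabs (r * s)) <= 1.
Proof.
  intros Hy Hrs. assert (Hd : 0 < s ^ 2 + (r * y) ^ 2).
  { pose proof (den_pos r s 0 y Hy Hrs) as H. replace ((r*0+s)^2) with (s^2) in H by ring. exact H. }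
  rewrite Rabs_mult.
  assert (0 <= (Rabs s - Rabs r * y)^2) by apply pow2_ge_0.
  assert (E1 : s^2 = Rabs s * Rabs s) by (rewrite <- Rabs_mult, Rabs_right; [ring | nra]).
  assert (E2 : (r*y)^2 = (Rabs r * y) * (Rabs r * y)).
  { replace (Rabs r * y * (Rabs r * y)) with (Rabs (r*r) * (y*y)) by (rewrite Rabs_mult; ring). rewrite Rabs_right by nra. ring. }
  apply Rmult_le_reg_r with (s ^ 2 + (r * y) ^ 2); auto.
  replace (y / (s ^ 2 + (r * y) ^ 2) * (2 * (Rabs r * Rabs s)) * (s ^ 2 + (r * y) ^ 2)) with (2 * (Rabs r * y) * Rabs s) by (field; lra).
  rewrite E1, E2 in *. nra.
Qed.

Lemma orbit_curve_bound g M t : Gamma2 g -> rdet M = 1 ->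
  snd (act g (curve M t)) * (2 * Rabs (Qf M (mc g) (md g))) <= 1.
Proof.
  intros Hg HM. rewrite act_curve; auto. rewrite Im_vert.
  pose proof (rdet_toR g Hg) as Hdg.
  assert (Hdet : rdet (rmul (toR g) M) = 1).
  { destruct M as [[[p q] r] s]; destruct (toR g) as [[[a b] c] d]; unfold rdet, rmul in *.
    replace ((a * p + b * r) * (c * q + d * s) - (a * q + b * s) * (c * p + d * r)) with ((a*d-b*c)*(p*s-q*r)) by ring.
    rewrite Hdg, HM; ring. }
  destruct M as [[[p q] r] s]; unfold toR in *; unfold rmul, Qf in *.
  apply amgm_bound. apply exp_pos. unfold rdet in Hdet. eapply det1_nz. exact Hdet.
Qed.

Lemma orbit_curve_attain g M : Gamma2 g -> rdet M = 1 -> Qf M (mc g) (md g) <> 0 ->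
  exists t, snd (act g (curve M t)) * (2 * Rabs (Qf M (mc g) (md g))) = 1.
Proof.
  intros Hg HM HQ. destruct M as [[[p q] r] s]. unfold Qf in *.
  set (r' := mc g * p + md g * r) in *. set (s' := mc g * q + md g * s) in *.
  assert (Hr : r' <> 0) by (intro h; apply HQ; rewrite h; ring).
  assert (Hs : s' <> 0) by (intro h; apply HQ; rewrite h; ring).
  assert (Hpos : 0 < Rabs (s' / r')) by (apply Rabs_pos_lt; unfold Rdiv; apply Rmult_integral_contrapositive; split; auto; apply Rinv_neq_0_compat; auto).
  exists (ln (Rabs (s' / r'))). rewrite act_curve; auto. rewrite Im_vert, exp_ln by auto.
  destruct g as [[[a b] c] d]; unfold toR, rmul, ma, mb, mc, md in *; fold r' s'.
  rewrite Rabs_div by auto. rewrite Rabs_mult.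
  assert (0 < Rabs r') by (apply Rabs_pos_lt; auto). assert (0 < Rabs s') by (apply Rabs_pos_lt; auto).
  assert (E1 : s'^2 = Rabs s' * Rabs s') by (rewrite <- Rabs_mult, Rabs_right; [ring | nra]).
  assert (E3 : r'^2 = Rabs r' * Rabs r') by (rewrite <- Rabs_mult, Rabs_right; [ring | nra]).
  assert (E2 : (r' * (Rabs s' / Rabs r'))^2 = Rabs s' * Rabs s') .
  { replace ((r' * (Rabs s' / Rabs r'))^2) with (r'^2 * (Rabs s' / Rabs r')^2) by ring. rewrite E3. field. lra. }
  rewrite E1, E2. field. repeat split; nra.
Qed.

Lemma ch_abs x : ch (Rabs x) = ch x.
Proof.
  unfold ch. destruct (Rle_or_lt 0 x). rewrite Rabs_right by lra; reflexivity.
  rewrite Rabs_left by lra. rewrite Ropp_involutive. lra.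
Qed.

Lemma dH_eq_ch p q s : inH p -> inH q -> dH p q = Rabs s ->
  1 + ((fst p - fst q) ^ 2 + (snd p - snd q) ^ 2) / (2 * snd p * snd q) = ch s.
Proof.
  intros Hp Hq H. rewrite <- ch_abs. apply arcosh_inv. apply dH_arg_ge1; auto. exact H.
Qed.

Lemma e_gt1 : 1 < exp 1.
Proof. pose proof (exp_increasing 0 1) as H. rewrite exp_0 in H. apply H; lra. Qed.

Lemma uniq_point x y t : 0 < y -> dH (0, 1) (x, y) = Rabs t -> dH (0, exp 1) (x, y) = Rabs (1 - t) ->
  (x, y) = (0, exp t).
Proof.
  intros Hy H1 H2.
  assert (Hi : inH (0,1)) by (unfold inH; simpl; lra).
  assert (Hie : inH (0, exp 1)) by (unfold inH; simpl; apply exp_pos).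
  apply dH_eq_ch in H1; auto. apply dH_eq_ch in H2; auto. cbn [fst snd] in *.
  unfold ch in *. pose proof e_gt1 as He. pose proof (exp_pos t) as Ht.
  assert (E1 : exp (1 - t) = exp 1 * / exp t) by (unfold Rminus; rewrite exp_plus, exp_Ropp; auto).
  assert (E2 : exp (- (1 - t)) = exp t * / exp 1) by (rewrite Ropp_minus_distr; unfold Rminus; rewrite exp_plus, exp_Ropp; auto).
  rewrite exp_Ropp in H1. rewrite E1, E2 in H2.
  set (E := exp t) in *. set (e := exp 1) in *.
  assert (A1 : x * x + y * y + 1 = y * (E + / E)).
  { transitivity (2*y*(1 + ((0-x)^2 + (1-y)^2)/(2*1*y))). field; lra. rewrite H1; field; lra. }
  assert (A2 : x * x + y * y + e * e = y * (e * / E + E * / e) * e).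
  { transitivity (2*e*y*(1 + ((0-x)^2 + (e-y)^2)/(2*e*y))). field; lra. rewrite H2; field; lra. }
  assert (HyE : y = E).
  { assert (A3 : e * e - 1 = y * (e * e - 1) * / E) by (rewrite <- (Rplus_0_r (e*e)) at 1; 
       replace (e * e + 0 - 1) with ((x * x + y * y + e * e) - (x * x + y * y + 1)) by ring; rewrite A1, A2; field; lra).
    assert (e * e - 1 <> 0) by nra.
    apply (f_equal (fun z => z * E / (e * e - 1))) in A3. field_simplify in A3; auto. split; [lra|auto]. }
  rewrite HyE in A1 |- *. assert (x * x = 0). { assert (E * (E + / E) = E * E + 1) by (field; lra). nra. }
  f_equal. nra. 
Qed.

Lemma rdet_mul m n : rdet (rmul m n) = rdet m * rdet n.
Proof. destruct m as [[[a b] c] d]; destruct n as [[[a' b'] c'] d']; unfold rdet, rmul; ring. Qed.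

Lemma mob_cancel m n p : rdet m = 1 -> rdet n = 1 -> rmul m n = (1, 0, 0, 1) -> inH p -> mob m (mob n p) = p.
Proof. intros Hm Hn Hmn Hp. rewrite <- mob_comp, Hmn; auto. apply mob_id; auto. Qed.

Lemma rot_exists u v : 0 < v -> 1 + ((0 - u) ^ 2 + (1 - v) ^ 2) / (2 * 1 * v) = ch 1 ->
  exists al be, al * al + be * be = 1 /\ mob (al, be, - be, al) (0, exp 1) = (u, v).
Proof.
  intros Hv H. unfold ch in H. rewrite exp_Ropp in H. pose proof e_gt1 as He. set (e := exp 1) in *.
  assert (A : u * u + v * v + 1 = v * (e + / e)).
  { transitivity (2*v*(1 + ((0-u)^2 + (1-v)^2)/(2*1*v))). field; lra. rewrite H; field; lra. }
  assert (Hee : e * / e = 1) by (field; lra).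
  assert (Hv1 : (v - e) * (v * e - 1) <= 0).
  { assert (0 <= u * u) by nra. assert ((v - e) * (v * e - 1) = e * (v * v - v * (e + / e) + 1)) by (field; lra). nra. }
  assert (Hv2 : 0 <= e - v /\ 0 <= v * e - 1).
  { assert (He2 : e * e > 1) by nra. split.
    - destruct (Rle_or_lt v e); [lra|exfalso]. assert (v * e - 1 > 0) by nra.
      assert (0 < (v - e) * (v * e - 1)) by (apply Rmult_lt_0_compat; lra). lra.
    - destruct (Rle_or_lt 0 (v*e-1)); [lra|exfalso]. assert (v < e) by nra.
      assert (0 < (e - v) * (1 - v * e)) by (apply Rmult_lt_0_compat; lra). nra. }
  assert (Hd : 0 < v * (e * e - 1)) by (apply Rmult_lt_0_compat; nra).
  set (B2 := (e - v) / (v * (e * e - 1))). set (A2 := e * (v * e - 1) / (v * (e * e - 1))).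
  assert (HB2 : 0 <= B2) by (apply Rdiv_le_0_compat; lra).
  assert (HA2 : 0 <= A2) by (apply Rdiv_le_0_compat; nra).
  set (be := sqrt B2). assert (Hbe : be * be = B2) by (apply sqrt_sqrt; auto).
  assert (Hbe0 : 0 <= be) by apply sqrt_pos.
  set (a0 := sqrt A2). assert (Ha0 : a0 * a0 = A2) by (apply sqrt_sqrt; auto).
  assert (Ha00 : 0 <= a0) by apply sqrt_pos.
  set (al := if Rle_dec 0 u then - a0 else a0).
  assert (Hal : al * al = A2) by (unfold al; destruct (Rle_dec 0 u); nra).
  assert (Hsum : A2 + B2 = 1) by (unfold A2, B2; field; nra).
  assert (Hden : A2 + B2 * (e * e) = e / v) by (unfold A2, B2; field; nra).
  exists al, be. split. lra.
  unfold mob; cbn [fst snd].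
  replace ((- be * 0 + al) ^ 2 + (- be * e) ^ 2) with (A2 + B2 * (e*e)) by (rewrite <- Hal, <- Hbe; ring).
  rewrite Hden. f_equal; [| field; lra].
  set (R0 := ((al * 0 + be) * (- be * 0 + al) + al * - be * e ^ 2) / (e / v)).
  assert (HR : R0 = al * be * (1 - e * e) * v / e) by (unfold R0; field; lra).
  assert (HR2 : R0 * R0 = u * u).
  { rewrite HR. replace (al * be * (1 - e * e) * v / e * (al * be * (1 - e * e) * v / e)) with ((al*al) * (be*be) * ((1 - e*e) * v / e)^2) by (field; lra).
    rewrite Hal, Hbe. unfold A2, B2.
    assert (u * u = (e - v) * (v * e - 1) / e) by (apply (f_equal (fun z => z - v*v - 1)) in A; field_simplify in A; [|lra]; field_simplify; [|lra]; nra).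
    rewrite H0. field. nra. }
  assert (Hsg : 0 <= R0 * u).
  { rewrite HR. unfold al. assert (0 < v / e) by (apply Rdiv_lt_0_compat; lra).
    assert (0 <= a0 * be) by nra.
    destruct (Rle_dec 0 u).
    - replace (- a0 * be * (1 - e * e) * v / e * u) with ((a0 * be) * (e * e - 1) * (v / e) * u) by (field; lra).
      apply Rmult_le_pos; auto. apply Rmult_le_pos; [|lra]. apply Rmult_le_pos; nra.
    - replace (a0 * be * (1 - e * e) * v / e * u) with ((a0 * be) * (e * e - 1) * (v / e) * (- u)) by (field; lra).
      apply Rmult_le_pos; [|lra]. apply Rmult_le_pos; [|lra]. apply Rmult_le_pos; nra. }
  assert (Hf : (R0 - u) * (R0 + u) = 0) by nra.
  destruct (Rmult_integral _ _ Hf) as [h|h]; [lra|].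
  assert (u * u <= 0) by nra. assert (u = 0) by nra. lra.
Qed.

Lemma geodesic_classify c : geodesic_line c -> exists M, rdet M = 1 /\ forall t, c t = curve M t.
Proof.
  intros [Hin Hd].
  destruct (c 0) as [x0 y0] eqn:Hc0.
  assert (Hy0 : 0 < y0) by (pose proof (Hin 0) as h; rewrite Hc0 in h; exact h).
  set (s0 := sqrt y0). assert (Hs0 : 0 < s0) by (apply sqrt_lt_R0; auto).
  assert (Hss : s0 * s0 = y0) by (apply sqrt_sqrt; lra).
  set (A := (/ s0, - x0 / s0, 0, s0) : rmat). set (Ai := (s0, x0 / s0, 0, / s0) : rmat).
  assert (HA : rdet A = 1) by (unfold A, rdet; field; lra).
  assert (HAi : rdet Ai = 1) by (unfold Ai, rdet; field; lra).
  assert (HAiA : rmul Ai A = (1,0,0,1)) by (unfold Ai, A, rmul; f_equal; [f_equal; [f_equal|]|]; field; lra).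
  assert (HA0 : mob A (c 0) = (0, 1)).
  { rewrite Hc0. unfold A, mob; cbn [fst snd]. rewrite <- Hss. f_equal; field; lra. }
  set (w := mob A (c 1)).
  assert (Hw : inH w) by (apply mob_inH; auto).
  assert (Hdw : dH (0,1) w = Rabs 1).
  { rewrite <- HA0. unfold w. rewrite dH_mob; auto. rewrite Hd, Rabs_minus_sym. f_equal; ring. }
  apply dH_eq_ch in Hdw; [| unfold inH; simpl; lra | auto].
  destruct w as [u v] eqn:Hweq. cbn [fst snd] in Hdw.
  destruct (rot_exists u v Hw Hdw) as [al [be [Hab HK]]].
  set (K := (al, be, - be, al) : rmat). set (Ki := (al, - be, be, al) : rmat).
  assert (HKd : rdet K = 1) by (unfold K, rdet; lra).
  assert (HKid : rdet Ki = 1) by (unfold Ki, rdet; lra).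
  assert (HKiK : rmul Ki K = (1,0,0,1)) by (unfold Ki, K, rmul; f_equal; [f_equal; [f_equal|]|]; lra).
  assert (HKKi : rmul K Ki = (1,0,0,1)) by (unfold Ki, K, rmul; f_equal; [f_equal; [f_equal|]|]; lra).
  assert (HKi1 : mob Ki (0, 1) = (0, 1)).
  { unfold Ki, mob; cbn [fst snd]. replace ((be * 0 + al) ^ 2 + (be * 1) ^ 2) with 1 by nra. f_equal; field. }
  assert (HKie : mob Ki (u, v) = (0, exp 1)).
  { rewrite <- HK. apply mob_cancel; auto. unfold inH; simpl; apply exp_pos. }
  exists (rmul Ai K). split.
  { rewrite rdet_mul, HAi, HKd; ring. }
  intros t.
  set (z := mob Ki (mob A (c t))).
  assert (Hz : inH z) by (apply mob_inH; auto; apply mob_inH; auto).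
  assert (Hz1 : dH (0, 1) z = Rabs t).
  { rewrite <- HKi1, <- HA0. unfold z. rewrite dH_mob, dH_mob; auto. rewrite Hd, Rabs_minus_sym. f_equal; ring.
    apply mob_inH; auto. apply mob_inH; auto. }
  assert (Hz2 : dH (0, exp 1) z = Rabs (1 - t)).
  { rewrite <- HKie. rewrite <- Hweq. unfold w, z. rewrite dH_mob, dH_mob; auto. 
    apply mob_inH; auto. apply mob_inH; auto. }
  destruct z as [x y] eqn:Hzeq.
  pose proof (uniq_point x y t Hz Hz1 Hz2) as Hu.
  unfold curve. rewrite mob_comp; auto. 2: apply (ray_inH t).
  change (0, exp t) with (ray t). unfold ray. rewrite <- Hu, <- Hzeq. unfold z.
  rewrite (mob_cancel K Ki); auto. rewrite mob_cancel; auto. all: try (apply mob_inH; auto).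
Qed.

Module ZPart_G0.
Local Open Scope Z_scope.

Lemma sq_diff4 t s : t * t - 4 = s * s -> t * t = 4.
Proof.
  intros H.
  assert (H1 : (Z.abs t - Z.abs s) * (Z.abs t + Z.abs s) = 4).
  { replace ((Z.abs t - Z.abs s) * (Z.abs t + Z.abs s)) with (Z.abs t * Z.abs t - Z.abs s * Z.abs s) by ring.
    rewrite <- !Z.abs_mul. rewrite !Z.abs_eq by nia. lia. }
  pose proof (Z.abs_nonneg t). pose proof (Z.abs_nonneg s).
  assert (H9 : Z.abs s = 0 \/ Z.abs s >= 1) by lia.
  destruct H9 as [H9|H9].
  - assert (s = 0) by lia. subst s. lia.
  - exfalso. assert (Z.abs t - Z.abs s >= 1) by nia.
    assert (Z.abs t - Z.abs s = 1 \/ Z.abs t - Z.abs s >= 2) by lia. nia.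
Qed.

Lemma rat_square X x D : x <> 0 -> X * X = D * (x * x) -> exists s, D = s * s.
Proof.
  intros Hx H.
  set (g := Z.gcd X x).
  assert (Hg : g <> 0) by (unfold g; intro h; apply Z.gcd_eq_0 in h; lia).
  destruct (Z.gcd_divide_l X x) as [k1 Hk1]. destruct (Z.gcd_divide_r X x) as [k2 Hk2]. fold g in Hk1, Hk2.
  assert (Hc : Z.gcd k1 k2 = 1).
  { pose proof (Z.gcd_div_gcd X x g Hg eq_refl) as h.
    assert (e1 : X / g = k1) by (rewrite Hk1; apply Z.div_mul; auto).
    assert (e2 : x / g = k2) by (rewrite Hk2; apply Z.div_mul; auto).
    rewrite e1, e2 in h. exact h. }
  assert (Hk : k1 * k1 = D * (k2 * k2)).
  { rewrite Hk1, Hk2 in H. apply Z.mul_reg_r with (g * g). nia. nia. }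
  assert (Hd : (k2 | k1 * k1)) by (exists (D * k2); lia).
  apply Z.gauss in Hd; [| rewrite Z.gcd_comm; auto].
  assert (Hd2 : (k2 | 1)) by (rewrite <- Hc; apply Z.gcd_greatest; auto; apply Z.divide_refl).
  apply Z.divide_1_r in Hd2. exists k1. destruct Hd2; subst k2; lia.
Qed.

Lemma Fint_nz a b c d x y : a * d - b * c = 1 -> (a + d) * (a + d) <> 4 -> (x <> 0 \/ y <> 0) ->
  b * (x * x) + (d - a) * (x * y) - c * (y * y) <> 0.
Proof.
  intros Hdet Htr Hxy HF.
  destruct (Z.eq_dec c 0) as [Hc|Hc].
  - subst c. assert (a * d = 1) by lia. apply Htr. 
    destruct (Z.mul_eq_1 a d H) as [-> | ->]; [assert (d = 1) by lia | assert (d = -1) by lia]; subst; lia.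
  - assert (E : (2 * c * y - (d - a) * x) * (2 * c * y - (d - a) * x) = ((a + d) * (a + d) - 4) * (x * x)).
    { replace ((a + d) * (a + d) - 4) with ((d - a) * (d - a) + 4 * (b * c)) by nia. nia. }
    destruct (Z.eq_dec x 0) as [Hx0|Hx0].
    + subst x. destruct Hxy as [|Hy]; [lia|]. simpl in E. rewrite Z.mul_0_r in E.
      assert (2 * c * y = 0) by nia. nia.
    + destruct (rat_square _ _ _ Hx0 E) as [s Hs]. apply Htr. apply (sq_diff4 _ s). lia.
Qed.

End ZPart_G0.
Import ZPart_G0.

Definition adj (m : rmat) : rmat := let '(p, q, r, s) := m in (s, - q, - r, p).
Definition rI : rmat := (1, 0, 0, 1).

Ltac mat_eq := f_equal; [f_equal; [f_equal|]|].

Lemma rmul_assoc m n k : rmul m (rmul n k) = rmul (rmul m n) k.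
Proof. destruct m as [[[a b] c] d]; destruct n as [[[a' b'] c'] d']; destruct k as [[[x y] z] w]; unfold rmul; mat_eq; ring. Qed.
Lemma rmul_I_l m : rmul rI m = m.
Proof. destruct m as [[[a b] c] d]; unfold rmul, rI; mat_eq; ring. Qed.
Lemma rmul_I_r m : rmul m rI = m.
Proof. destruct m as [[[a b] c] d]; unfold rmul, rI; mat_eq; ring. Qed.
Lemma adj_l m : rdet m = 1 -> rmul (adj m) m = rI.
Proof. destruct m as [[[a b] c] d]; unfold rdet, rmul, adj, rI; intros; mat_eq; nra. Qed.
Lemma adj_r m : rdet m = 1 -> rmul m (adj m) = rI.
Proof. destruct m as [[[a b] c] d]; unfold rdet, rmul, adj, rI; intros; mat_eq; nra. Qed.
Lemma rdet_adj m : rdet (adj m) = rdet m.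
Proof. destruct m as [[[a b] c] d]; unfold rdet, adj; ring. Qed.

Lemma div_eq_inv y D Y : 0 < D -> 0 < Y -> y / D = Y -> D = y / Y.
Proof. intros HD HY H. rewrite <- H. field. split; [lra|]. intro h. subst. unfold Rdiv in HY. rewrite Rmult_0_l in HY. lra. Qed.

Lemma diag_from_vert (N : rmat) T : rdet N = 1 -> (forall t, mob N (0, exp t) = (0, exp (t + T))) ->
  exists lam mu, N = (lam, 0, 0, mu) /\ lam * mu = 1 /\ mu * mu = exp (- T).
Proof.
  destruct N as [[[n1 n2] n3] n4]; unfold rdet; intros Hdet H.
  pose proof (H 0) as H0. pose proof (H 1) as H1. unfold mob in H0, H1; cbn [fst snd] in H0, H1.
  rewrite exp_0, Rplus_0_l in H0.
  pose proof e_gt1 as He. pose proof (exp_pos T) as HT. pose proof (exp_pos (1 + T)) as HT1.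
  pose proof (f_equal fst H0) as R0. pose proof (f_equal snd H0) as I0.
  pose proof (f_equal fst H1) as R1. pose proof (f_equal snd H1) as I1. cbn [fst snd] in R0, I0, R1, I1.
  assert (Hnz : n3 <> 0 \/ n4 <> 0) by (eapply det1_nz; eauto).
  assert (D0 : 0 < (n3 * 0 + n4) ^ 2 + (n3 * 1) ^ 2) by (apply den_pos; auto; lra).
  assert (D1 : 0 < (n3 * 0 + n4) ^ 2 + (n3 * exp 1) ^ 2) by (apply den_pos; auto; apply exp_pos).
  set (e := exp 1) in *.
  assert (Ie : exp (1 + T) = e * exp T) by (rewrite exp_plus; auto).
  rewrite Ie in I1.
  apply div_eq_inv in I0; auto. apply div_eq_inv in I1; [| auto | apply Rmult_lt_0_compat; lra].
  assert (J0 : n4 * n4 + n3 * n3 = / exp T) by (replace (n4*n4+n3*n3) with ((n3 * 0 + n4) ^ 2 + (n3 * 1) ^ 2) by ring; rewrite I0; field; lra).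
  assert (J1 : n4 * n4 + n3 * n3 * (e * e) = / exp T) by (replace (n4 * n4 + n3 * n3 * (e * e)) with ((n3 * 0 + n4) ^ 2 + (n3 * e) ^ 2) by ring; rewrite I1; field; lra).
  assert (Hn3 : n3 = 0).
  { assert (K : n3 * n3 * (e * e - 1) = 0) by (transitivity ((n4 * n4 + n3 * n3 * (e * e)) - (n4 * n4 + n3 * n3)); [ring| rewrite J0, J1; ring]).
    apply Rmult_integral in K. destruct K as [K|K]; [apply Rmult_integral in K; tauto| nra]. } subst n3.
  assert (Hn2 : n2 = 0).
  { replace ((0 * 0 + n4) ^ 2 + (0 * 1) ^ 2) with (n4 * n4) in R0 by ring.
    assert (n4 <> 0) by (intro; subst; nra).
    assert (K : n2 * n4 * / (n4 * n4) = 0) by (rewrite <- R0; field; auto).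
    apply Rmult_integral in K. destruct K as [K|K].
    - apply Rmult_integral in K; tauto.
    - exfalso. revert K. apply Rinv_neq_0_compat. nra. }
  subst n2. exists n1, n4. split; [auto|split; [lra|]]. rewrite exp_Ropp. lra.
Qed.

Definition Fform (G : rmat) (x y : R) : R := let '(a, b, c, d) := G in b * (x * x) + (d - a) * (x * y) - c * (y * y).

Lemma Fform_conj M lam mu x y : rdet M = 1 ->
  Fform (rmul M (rmul (lam, 0, 0, mu) (adj M))) x y = (mu - lam) * Qf M x y.
Proof.
  destruct M as [[[p q] r] s]; unfold rdet, Fform, rmul, adj, Qf; simpl; intros H.
  ring.
Qed.

Lemma closed_structure c : closed_geodesic c -> exists M g lam mu, rdet M = 1 /\ Gamma2 g /\
  (forall t, c t = curve M t) /\ toR g = rmul M (rmul (lam, 0, 0, mu) (adj M)) /\ lam * mu = 1 /\ mu * mu < 1.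
Proof.
  intros [Hgeo [T [g [HT [Hg Hper]]]]].
  destruct (geodesic_classify c Hgeo) as [M [HM Hc]].
  set (N := rmul (adj M) (rmul (toR g) M)).
  assert (HgM : rdet (toR g) = 1) by (apply rdet_toR; auto).
  assert (HadjM : rdet (adj M) = 1) by (rewrite rdet_adj; auto).
  assert (HN : rdet N = 1) by (unfold N; rewrite !rdet_mul, HadjM, HgM, HM; ring).
  assert (Hv : forall t, mob N (0, exp t) = (0, exp (t + T))).
  { intros t. unfold N.
    assert (Hz : inH (0, exp t)) by apply (ray_inH t).
    rewrite (mob_comp (adj M) (rmul (toR g) M)); auto. 2: rewrite rdet_mul, HgM, HM; ring.
    rewrite (mob_comp (toR g) M); auto.
    change (mob M (0, exp t)) with (curve M t). rewrite <- Hc, <- act_mob, <- Hper, Hc. unfold curve.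
    apply mob_cancel; auto. apply adj_l; auto. apply (ray_inH (t+T)). }
  destruct (diag_from_vert N T HN Hv) as [lam [mu [HNe [Hlm Hmu]]]].
  exists M, g, lam, mu. repeat split; auto.
  - rewrite <- HNe. unfold N. rewrite !rmul_assoc, adj_r, rmul_I_l, <- rmul_assoc, adj_r, rmul_I_r; auto.
  - rewrite Hmu. rewrite <- exp_0. apply exp_increasing. lra.
Qed.

Lemma exists_min (P : nat -> Prop) : (exists n, P n) -> exists n, P n /\ forall m, P m -> (n <= m)%nat.
Proof.
  intros [n Hn]. revert Hn. induction n as [n IH] using (well_founded_induction lt_wf). intros Hn.
  destruct (classic (exists m, P m /\ (m < n)%nat)) as [[m [Hm Hlt]]|Hno].
  - apply (IH m Hlt Hm).
  - exists n; split; auto. intros m Hm. destruct (Nat.lt_ge_cases m n); auto. exfalso; apply Hno; eauto.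
Qed.

Definition gmul (g h : mat) : mat :=
  let '(a, b, c, d) := g in let '(a', b', c', d') := h in
  ((a * a' + b * c')%Z, (a * b' + b * d')%Z, (c * a' + d * c')%Z, (c * b' + d * d')%Z).

Lemma Gamma2_mul g h : Gamma2 g -> Gamma2 h -> Gamma2 (gmul g h).
Proof.
  destruct g as [[[a b] c] d]; destruct h as [[[a' b'] c'] d']; unfold Gamma2, gmul.
  intros [H1 [[x1 H2] [[x2 H3] [[x3 H4] [x4 H5]]]]] [K1 [[y1 K2] [[y2 K3] [[y3 K4] [y4 K5]]]]].
  subst. split; [nia|]. split; [|split; [|split]].
  - exists (2*x1*y1 + x1 + y1 + 2*x2*y3)%Z; nia.
  - exists ((2*x1+1)*y2 + x2*(2*y4+1))%Z; nia.
  - exists (x3*(2*y1+1) + (2*x4+1)*y3)%Z; nia.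
  - exists (2*x3*y2 + 2*x4*y4 + x4 + y4)%Z; nia.
Qed.

Lemma toR_gmul g h : toR (gmul g h) = rmul (toR g) (toR h).
Proof.
  destruct g as [[[a b] c] d]; destruct h as [[[a' b'] c'] d']; unfold toR, gmul, rmul, ma, mb, mc, md.
  rewrite !plus_IZR, !mult_IZR; reflexivity.
Qed.

Lemma key_real n11 n12 n21 n22 : n11 * n22 - n12 * n21 = 1 -> 1 <= Rabs (n21 * n22) ->
  (forall m : Z, Rabs (n21 * n22) <= Rabs ((2 * n11 + (2 * IZR m + 1) * n21) * (2 * n12 + (2 * IZR m + 1) * n22))) ->
  exists k : Z, n11 = IZR k * n21.
Proof.
  intros Hdet Hq Hm.
  assert (Hn : n21 * n22 <> 0) by (intro h; rewrite h, Rabs_R0 in Hq; lra).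
  assert (H21 : n21 <> 0) by (intro h; apply Hn; rewrite h; ring).
  assert (H22 : n22 <> 0) by (intro h; apply Hn; rewrite h; ring).
  set (eta := n11 / n21). set (xi := n12 / n22).
  set (s := eta + xi). set (del := eta - xi).
  assert (Hdel : del * (n21 * n22) = 1) by (unfold del, eta, xi; field_simplify; auto; rewrite <- Hdet; field; auto).
  assert (Hdel2 : del * del <= 1).
  { assert (Rabs del * Rabs (n21 * n22) = 1) by (rewrite <- Rabs_mult, Hdel; apply Rabs_R1).
    assert (Rabs del <= 1) by (pose proof (Rabs_pos del); nra).
    assert (del * del = Rabs del * Rabs del) by (rewrite <- Rabs_mult, Rabs_right; nra).
    pose proof (Rabs_pos del). nra. }
  assert (Hdel0 : 0 < del * del) by (assert (del <> 0) by (intro h; rewrite h in Hdel; lra); nra).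
  assert (Hj : forall m : Z, 1 <= Rabs ((s + (2 * IZR m + 1)) ^ 2 - del * del)).
  { intros m. specialize (Hm m).
    replace ((2 * n11 + (2 * IZR m + 1) * n21) * (2 * n12 + (2 * IZR m + 1) * n22)) with
      ((n21 * n22) * ((s + (2 * IZR m + 1)) ^ 2 - del * del)) in Hm by (unfold s, del, eta, xi; field; auto).
    rewrite (Rabs_mult (n21 * n22)) in Hm. pose proof (Rabs_pos_lt _ Hn). 
    apply Rmult_le_reg_l with (Rabs (n21 * n22)); auto. lra. }
  set (x0 := (- s - 1) / 2).
  destruct (archimed x0) as [Hu1 Hu2].
  set (m := (up x0 - 1)%Z).
  assert (Hm1 : IZR m <= x0) by (unfold m; rewrite minus_IZR; simpl; lra).
  assert (Hm2 : x0 < IZR m + 1) by (unfold m; rewrite minus_IZR; simpl; lra).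
  set (sig := s + (2 * IZR m + 1)).
  assert (Hs1 : sig <= 0) by (unfold sig, x0 in *; lra).
  assert (Hs2 : -2 < sig) by (unfold sig, x0 in *; lra).
  pose proof (Hj m) as HA. pose proof (Hj (m + 1)%Z) as HB. rewrite plus_IZR in HB. simpl in HB.
  replace (s + (2 * (IZR m + 1) + 1)) with (sig + 2) in HB by (unfold sig; ring). fold sig in HA.
  assert (Hsd : sig * sig = 0 /\ del * del = 1).
  { destruct (Rle_or_lt 0 (sig ^ 2 - del * del)) as [h|h].
    - exfalso. rewrite Rabs_right in HA by lra. simpl in HA.
      assert (sig < -1) by nra.
      destruct (Rle_or_lt 0 ((sig + 2) ^ 2 - del * del)) as [h'|h'].
      + rewrite Rabs_right in HB by lra. simpl in HB. nra.
      + rewrite Rabs_left in HB by lra. simpl in HB. nra.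
    - rewrite Rabs_left in HA by lra. simpl in HA. split; nra. }
  assert (Hsig : sig = 0) by (destruct Hsd; nra).
  destruct Hsd as [_ Hd1].
  assert (Hdd : del = 1 \/ del = -1).
  { assert ((del - 1) * (del + 1) = 0) by nra. apply Rmult_integral in H. destruct H; [left|right]; lra. }
  assert (Heta : 2 * eta = - (2 * IZR m + 1) + del) by (unfold sig, s, del in *; lra).
  destruct Hdd as [Hd|Hd].
  - exists (- m)%Z. rewrite opp_IZR. assert (eta = - IZR m) by lra. unfold eta in H. 
    apply (f_equal (fun z => z * n21)) in H. field_simplify in H; auto. lra.
  - exists (- m - 1)%Z. rewrite minus_IZR, opp_IZR. assert (eta = - IZR m - 1) by lra. unfold eta in H.
    apply (f_equal (fun z => z * n21)) in H. field_simplify in H; auto. simpl. lra.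
Qed.

Lemma exists_row (m : Z) : exists a' b', Gamma2 (a', b', 2%Z, (2 * m + 1)%Z).
Proof.
  destruct (Z.Even_or_Odd m) as [[u Hu]|[u Hu]].
  - exists 1%Z, m. unfold Gamma2. repeat split; try lia. exists 0%Z; lia. exists u; lia. exists 1%Z; lia. exists m; lia.
  - exists (-1)%Z, (- (m + 1))%Z. unfold Gamma2. repeat split; try lia. exists (-1)%Z; lia. exists (- u - 1)%Z; lia. exists 1%Z; lia. exists m; lia.
Qed.

Definition gc (g : mat) : Z := let '(_, _, c, _) := g in c.
Definition gd (g : mat) : Z := let '(_, _, _, d) := g in d.

Lemma mc_gc g : mc g = IZR (gc g).
Proof. destruct g as [[[a b] c] d]; reflexivity. Qed.
Lemma md_gd g : md g = IZR (gd g).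
Proof. destruct g as [[[a b] c] d]; reflexivity. Qed.
Lemma gd_odd g : Gamma2 g -> gd g <> 0%Z.
Proof. destruct g as [[[a b] c] d]; unfold Gamma2, gd. intros [_ [_ [_ [_ [k Hk]]]]]. lia. Qed.

Lemma closed_high c : closed_geodesic c ->
  (exists t g, Gamma2 g /\ / 2 < snd (act g (c t))) /\
  (exists B, 0 < B /\ forall t g, Gamma2 g -> snd (act g (c t)) <= B).
Proof.
  intros Hcl. destruct (closed_structure c Hcl) as [M [g [lam [mu [HM [Hg [Hc [Hconj [Hlm Hmu]]]]]]]]].
  destruct g as [[[a b] cc] d].
  set (Fint := fun x y : Z => (b * (x * x) + (d - a) * (x * y) - cc * (y * y))%Z).
  assert (HF : forall x y : Z, IZR (Fint x y) = (mu - lam) * Qf M (IZR x) (IZR y)).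
  { intros x y. rewrite <- Fform_conj, <- Hconj; auto. unfold Fint, Fform, toR, ma, mb, mc, md.
    rewrite !minus_IZR, !plus_IZR, !mult_IZR, !minus_IZR. ring. }
  assert (Hdet : (a * d - b * cc = 1)%Z) by (destruct Hg; auto).
  assert (Hlam : lam <> mu) by (intro h; subst; nra).
  assert (Hlm0 : mu - lam <> 0) by lra.
  assert (Htr : ((a + d) * (a + d) <> 4)%Z).
  { intro h. apply (f_equal IZR) in h. rewrite mult_IZR, plus_IZR in h.
    assert (E : IZR a + IZR d = lam + mu).
    { destruct M as [[[p q] r] s]. unfold toR, rmul, adj, ma, mb, mc, md, rdet in Hconj, HM. simpl in Hconj.
      injection Hconj as E1 E2 E3 E4. rewrite E1, E4. transitivity ((lam + mu) * (p * s - q * r)); [ring| rewrite HM; ring]. }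
    rewrite E in h. assert ((lam - mu) * (lam - mu) = 0) by (simpl in h; nra).
    apply Rmult_integral in H; destruct H; lra. }
  assert (NZ : forall x y : Z, (x <> 0 \/ y <> 0)%Z -> Fint x y <> 0%Z) by (intros; apply Fint_nz; auto).
  assert (Qlow : forall x y : Z, (x <> 0 \/ y <> 0)%Z -> 1 <= Rabs (mu - lam) * Rabs (Qf M (IZR x) (IZR y))).
  { intros x y Hxy. rewrite <- Rabs_mult, <- HF, <- abs_IZR. apply IZR_le. specialize (NZ x y Hxy). lia. }
  assert (Hmlpos : 0 < Rabs (mu - lam)) by (apply Rabs_pos_lt; auto).
  assert (Qg : forall h, Gamma2 h -> 1 <= Rabs (mu - lam) * Rabs (Qf M (mc h) (md h))).
  { intros h Hh. rewrite mc_gc, md_gd. apply Qlow. right. apply gd_odd; auto. }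
  split.
  2:{ exists (Rabs (mu - lam) / 2). split; [lra|]. intros t h Hh.
      rewrite Hc. pose proof (orbit_curve_bound h M t Hh HM) as H1. pose proof (Qg h Hh) as H2.
      pose proof (Rabs_pos (Qf M (mc h) (md h))). pose proof (act_inH h _ Hh (curve_inH M t HM)) as H3. unfold inH in H3.
      apply Rmult_le_reg_r with (2 * Rabs (Qf M (mc h) (md h))). nra.
      replace (Rabs (mu - lam) / 2 * (2 * Rabs (Qf M (mc h) (md h)))) with (Rabs (mu - lam) * Rabs (Qf M (mc h) (md h))) by field. lra. }
  apply NNPP. intros Hno.
  assert (Hall : forall t h, Gamma2 h -> snd (act h (c t)) <= / 2).
  { intros t h Hh. apply Rnot_lt_le. intro h'. apply Hno. exists t, h. auto. }
  assert (Q1 : forall h, Gamma2 h -> 1 <= Rabs (Qf M (mc h) (md h))).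
  { intros h Hh. assert (HQ0 : Qf M (mc h) (md h) <> 0).
    { intro h0. pose proof (Qg h Hh). rewrite h0, Rabs_R0 in H. lra. }
    destruct (orbit_curve_attain h M Hh HM HQ0) as [t Ht]. specialize (Hall t h Hh). rewrite Hc in Hall.
    pose proof (Rabs_pos (Qf M (mc h) (md h))). nra. }
  destruct (exists_min (fun n => exists h, Gamma2 h /\ Z.to_nat (Z.abs (Fint (gc h) (gd h))) = n)) as [n0 [[hs [Hhs Hn0]] Hmin]].
  { exists (Z.to_nat (Z.abs (Fint 0%Z 1%Z))). exists gid. split; [apply Gamma2_id| reflexivity]. }
  assert (Qmin : forall h, Gamma2 h -> Rabs (Qf M (mc hs) (md hs)) <= Rabs (Qf M (mc h) (md h))).
  { intros h Hh. assert (Hz : (Z.abs (Fint (gc hs) (gd hs)) <= Z.abs (Fint (gc h) (gd h)))%Z).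
    { specialize (Hmin _ (ex_intro _ h (conj Hh eq_refl))). lia. }
    apply IZR_le in Hz. rewrite !abs_IZR, !HF, !Rabs_mult in Hz. rewrite !mc_gc, !md_gd.
    apply Rmult_le_reg_l with (Rabs (mu - lam)); auto. }
  pose proof (Q1 hs Hhs) as Q1s.
  assert (Hhs' := Hhs).
  destruct hs as [[[a1 b1] c1] d1]. destruct Hhs' as [Hd1 [[o1 Ho1] [[e1 He1] [[e2 He2] [o2 Ho2]]]]].
  destruct M as [[[p q] r] s]. unfold rdet in HM.
  destruct (key_real (IZR a1 * p + IZR b1 * r) (IZR a1 * q + IZR b1 * s) (IZR c1 * p + IZR d1 * r) (IZR c1 * q + IZR d1 * s)) as [k Hk].
  - transitivity (IZR (a1 * d1 - b1 * c1) * (p * s - q * r)). rewrite minus_IZR, !mult_IZR; ring. rewrite Hd1, HM; ring.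
  - exact Q1s.
  - intros m. destruct (exists_row m) as [a' [b' Hr]].
    pose proof (Qmin _ (Gamma2_mul _ _ Hr Hhs)) as Hq. unfold Qf, gmul, mc, md in Hq. cbv beta iota zeta in Hq.
    eapply Rle_trans; [exact Hq| right]. f_equal. rewrite !plus_IZR, !mult_IZR. rewrite (plus_IZR (2 * m) 1), (mult_IZR 2 m). ring.
  - assert (HF0 : IZR (Fint (a1 - k * c1)%Z (b1 - k * d1)%Z) = 0).
    { rewrite HF. unfold Qf. rewrite !minus_IZR, !mult_IZR.
      replace ((IZR a1 - IZR k * IZR c1) * p + (IZR b1 - IZR k * IZR d1) * r) with ((IZR a1 * p + IZR b1 * r) - IZR k * (IZR c1 * p + IZR d1 * r)) by ring.
      rewrite Hk. ring. }
    apply eq_IZR in HF0. revert HF0. apply NZ. left. lia.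
Qed.

Module ZPart_I0.
Local Open Scope Z_scope.

Definition Kf (k e y : Z) := e * e + 2 * k * e * y - y * y.

Lemma Kf_pos k e y : 1 <= k -> 0 < e -> 0 < y -> Z.Odd e -> Z.Odd y -> y <= k * e -> (e < y \/ y <= e) -> 2 * k <= Z.abs (Kf k e y).
Proof.
  intros Hk He Hy Oe Oy Hyk _. unfold Kf.
  destruct (Z_le_gt_dec y e) as [h|h].
  - assert (e * e - y * y >= 0) by nia. assert (k * e * y >= k) by nia. lia.
  - destruct Oe as [u Hu]; destruct Oy as [v Hv].
    assert (y >= e + 2) by lia. assert (y >= 3) by lia.
    assert (2 * k * e - y >= k) by nia.
    assert (y * (2 * k * e - y) >= 3 * k) by nia. nia.
Qed.

Lemma Kf_bound k : 1 <= k -> forall n : nat, forall e y, Z.Odd e -> Z.Odd y -> Z.to_nat (Z.abs e + Z.abs y) = n -> 2 * k <= Z.abs (Kf k e y).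
Proof.
  intros Hk n. induction n as [n IH] using (well_founded_induction lt_wf).
  intros e0 y0 Oe0 Oy0 Hn.
  assert (Hnorm : exists e y, 0 < e /\ 0 < y /\ Z.Odd e /\ Z.Odd y /\ Z.abs e + Z.abs y = Z.abs e0 + Z.abs y0 /\ Z.abs (Kf k e y) = Z.abs (Kf k e0 y0)).
  { assert (Ne : e0 <> 0) by (destruct Oe0; lia). assert (Ny : y0 <> 0) by (destruct Oy0; lia).
    destruct (Z_lt_le_dec 0 e0); destruct (Z_lt_le_dec 0 y0).
    - exists e0, y0; repeat split; auto.
    - (* e0 > 0, y0 < 0 : (e,y) -> (y, -e) gives (y0, -e0): y0<0; then negate: (-y0, e0) *)
      exists (- y0), e0. repeat split; auto; try lia.
      destruct Oy0 as [u Hu]; exists (- u - 1); lia.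
      unfold Kf. replace ((- y0) * (- y0) + 2 * k * (- y0) * e0 - e0 * e0) with (- (e0 * e0 + 2 * k * e0 * y0 - y0 * y0)) by ring. lia.
    - exists y0, (- e0). repeat split; auto; try lia.
      destruct Oe0 as [u Hu]; exists (- u - 1); lia.
      unfold Kf. replace (y0 * y0 + 2 * k * y0 * (- e0) - (- e0) * (- e0)) with (- (e0 * e0 + 2 * k * e0 * y0 - y0 * y0)) by ring. lia.
    - exists (- e0), (- y0). repeat split; try lia.
      destruct Oe0 as [u Hu]; exists (- u - 1); lia. destruct Oy0 as [u Hu]; exists (- u - 1); lia.
      unfold Kf. f_equal. ring. }
  destruct Hnorm as [e [y [He [Hy [Oe [Oy [Hm HK]]]]]]]. rewrite <- HK.
  destruct (Z_le_gt_dec y (k * e)) as [h|h].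
  - apply Kf_pos; auto. lia.
  -
    assert (Hyk : y > e) by nia.
    set (e' := y - 2 * k * e).
    assert (Oe' : Z.Odd e') by (destruct Oy as [u Hu]; exists (u - k * e); unfold e'; lia).
    assert (Hlt : Z.abs e' + Z.abs e < Z.abs e + Z.abs y).
    { unfold e'. assert (k * e > 0) by nia. rewrite (Z.abs_eq e), (Z.abs_eq y) by lia.
      destruct (Z_le_gt_dec 0 (y - 2 * k * e)); [rewrite Z.abs_eq by lia | rewrite Z.abs_neq by lia]; lia. }
    assert (HK' : Z.abs (Kf k e' e) = Z.abs (Kf k e y)).
    { unfold Kf, e'. replace ((y - 2 * k * e) * (y - 2 * k * e) + 2 * k * (y - 2 * k * e) * e - e * e) with (- (e * e + 2 * k * e * y - y * y)) by ring. lia. }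
    rewrite <- HK'. apply (IH (Z.to_nat (Z.abs e' + Z.abs e))); auto. lia.
Qed.

Lemma Kf_ge k e y : 1 <= k -> Z.Odd e -> Z.Odd y -> 2 * k <= Z.abs (e * e + 2 * k * e * y - y * y).
Proof. intros. apply (Kf_bound k H (Z.to_nat (Z.abs e + Z.abs y))); auto. Qed.

Lemma Z_simple_aux (al be ga de : Z) : al * de - be * ga = 1 -> Z.Odd al -> Z.Even be -> Z.Even ga -> Z.Odd de ->
  (be * de) * (al * ga) < 0 -> False.
Proof.
  intros Hd [x1 H1] [x2 H2] [x3 H3] [x4 H4] Hneg. subst.
  assert (Hp : ((2 * x1 + 1) * (2 * x4 + 1)) * ((2 * x2) * (2 * x3)) < 0) by nia.
  assert (x2 <> 0 /\ x3 <> 0) by (split; intro; subst; nia).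
  destruct (Z_lt_le_dec 0 ((2 * x1 + 1) * (2 * x4 + 1))) as [h|h].
  - assert ((2 * x2) * (2 * x3) < 0) by nia. assert ((2 * x2) * (2 * x3) <= -4) by nia. nia.
  - assert ((2 * x1 + 1) * (2 * x4 + 1) <> 0) by nia.
    assert ((2 * x2) * (2 * x3) > 0) by nia. assert ((2 * x2) * (2 * x3) >= 4) by nia. nia.
Qed.

End ZPart_I0.
Import ZPart_I0.

Lemma closed_height_pos c : closed_geodesic c -> 0 < height_e1 c.
Proof.
  intros Hc. destruct (closed_high c Hc) as [[t0 [g [Hg Hhi]]] [B [HB HBb]]].
  assert (Hin : forall t, inH (c t)) by (intros; destruct Hc as [[H _] _]; auto).
  assert (Hup : forall t, beta_e1 (c t) <= ln (2 * B)) by (intros t; apply beta_e1_le; auto; intros h Hh; apply HBb; auto).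
  assert (Hlo : ln (2 * snd (act g (c t0))) <= beta_e1 (c t0)) by (apply beta_e1_ge; auto).
  destruct (height_bounds c _ _ t0 Hup Hlo) as [H1 _].
  assert (0 < ln (2 * snd (act g (c t0)))); [|lra].
    rewrite <- ln_1. apply ln_increasing; lra.
Qed.

Section Fam.
Variable k : Z.
Hypothesis Hk : (1 <= k)%Z.

Definition hk : mat := ((4 * k * k - 2 * k + 1)%Z, (2 * k)%Z, (4 * k * k)%Z, (2 * k + 1)%Z).
Definition Kr := IZR k.
Definition tau := 4 * Kr * Kr + 2.
Definition lamk := (tau + sqrt (tau * tau - 4)) / 2.
Definition muk := (tau - sqrt (tau * tau - 4)) / 2.
Definition Ak := 4 * Kr * Kr - 2 * Kr + 1.
Definition Bk := 2 * Kr.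
Definition Mk : rmat := (/ (muk - lamk), Bk, (lamk - Ak) / (Bk * (muk - lamk)), muk - Ak).

Lemma Kr_ge1 : 1 <= Kr.
Proof. unfold Kr. apply IZR_le in Hk. auto. Qed.

Lemma sqrt_tau : sqrt (tau * tau - 4) * sqrt (tau * tau - 4) = tau * tau - 4.
Proof. pose proof Kr_ge1. apply sqrt_sqrt. unfold tau. nra. Qed.

Lemma sqrt_tau_pos : 0 < sqrt (tau * tau - 4).
Proof. pose proof Kr_ge1. apply sqrt_lt_R0. unfold tau. nra. Qed.

Lemma lam_mu : lamk * muk = 1.
Proof. unfold lamk, muk. replace ((tau + sqrt (tau * tau - 4)) / 2 * ((tau - sqrt (tau * tau - 4)) / 2)) with ((tau * tau - sqrt (tau * tau - 4) * sqrt (tau * tau - 4)) / 4) by field. rewrite sqrt_tau. field. Qed.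

Lemma lam_gt_mu : muk < lamk.
Proof. unfold lamk, muk. pose proof sqrt_tau_pos. lra. Qed.

Lemma lam_pos : 0 < lamk.
Proof. unfold lamk. pose proof sqrt_tau_pos. pose proof Kr_ge1. assert (0 < tau) by (unfold tau; nra). lra. Qed.

Lemma char_lam : lamk * lamk = tau * lamk - 1.
Proof. pose proof lam_mu. assert (lamk + muk = tau) by (unfold lamk, muk; lra). nra. Qed.
Lemma char_mu : muk * muk = tau * muk - 1.
Proof. pose proof lam_mu. assert (lamk + muk = tau) by (unfold lamk, muk; lra). nra. Qed.

Lemma toR_hk : toR hk = (Ak, Bk, 4 * Kr * Kr, 2 * Kr + 1).
Proof.
  unfold toR, hk, ma, mb, mc, md, Ak, Bk, Kr. f_equal; [f_equal; [f_equal|]|];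
  rewrite ?plus_IZR, ?minus_IZR, ?mult_IZR; reflexivity.
Qed.

Lemma Gamma2_hk : Gamma2 hk.
Proof.
  unfold Gamma2, hk. repeat split.
  - nia.
  - exists (2 * k * k - k)%Z; lia.
  - exists k; lia.
  - exists (2 * k * k)%Z; lia.
  - exists k; lia.
Qed.

Lemma Mk_det : rdet Mk = 1.
Proof.
  unfold rdet, Mk, Bk. pose proof lam_gt_mu. pose proof Kr_ge1. field. split; lra.
Qed.

Lemma Mk_eig : rmul (toR hk) Mk = rmul Mk (lamk, 0, 0, muk).
Proof.
  rewrite toR_hk. unfold rmul, Mk, Bk, Ak. pose proof lam_gt_mu. pose proof Kr_ge1.
  pose proof char_lam as CL. pose proof char_mu as CM. unfold tau in CL, CM.
  f_equal; [f_equal; [f_equal|]|].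
  all: try (field; lra).
  all: try (field; split; lra).
  all: match goal with |- ?L = ?R =>
    assert (E : L - R = (- (lamk * lamk) + (4 * Kr * Kr + 2) * lamk - 1) / (2 * Kr * (muk - lamk)) \/
                L - R = (- (muk * muk) + (4 * Kr * Kr + 2) * muk - 1) / (2 * Kr * (muk - lamk)) * (2 * Kr * (muk - lamk)) / 1)
      by (first [left; field; split; lra | right; field; split; lra]);
    apply Rminus_diag_uniq; destruct E as [E|E]; rewrite E; [rewrite CL | rewrite CM]; field; split; lra end.
Qed.

Lemma lam_gt1 : 1 < lamk.
Proof. pose proof lam_mu. pose proof lam_gt_mu. pose proof lam_pos. nra. Qed.

Lemma hk_conj : toR hk = rmul Mk (rmul (lamk, 0, 0, muk) (adj Mk)).
Proof.
  rewrite rmul_assoc, <- Mk_eig, <- rmul_assoc, adj_r, rmul_I_r; auto. apply Mk_det.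
Qed.

Lemma mob_diag y : 0 < y -> mob (lamk, 0, 0, muk) (0, y) = (0, y * (lamk * lamk)).
Proof.
  intros Hy. pose proof lam_mu. pose proof lam_pos. unfold mob; cbn [fst snd].
  assert (muk <> 0) by (intro h; rewrite h in H; lra).
  assert (E : muk = / lamk) by (field_simplify_eq; lra).
  rewrite E. f_equal; field; lra.
Qed.

Lemma fam_closed : closed_geodesic (curve Mk).
Proof.
  split. apply curve_geodesic, Mk_det.
  pose proof lam_gt1. exists (2 * ln lamk), hk. split; [|split].
  - assert (0 < ln lamk) by (rewrite <- ln_1; apply ln_increasing; lra). lra.
  - apply Gamma2_hk.
  - intros t. rewrite act_curve; [| apply Gamma2_hk | apply Mk_det]. rewrite Mk_eig.
    rewrite mob_comp; [| apply Mk_det | unfold rdet; pose proof lam_mu; lra | apply (ray_inH t)].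
    rewrite mob_diag by apply exp_pos. unfold curve. f_equal. f_equal.
    rewrite exp_plus. f_equal. replace (2 * ln lamk) with (ln lamk + ln lamk) by ring.
    rewrite exp_plus, exp_ln; lra.
Qed.

Lemma fam_Q g : Gamma2 g -> 4 * Kr * Kr <= (lamk - muk) * Rabs (Qf Mk (mc g) (md g)).
Proof.
  intros Hg. pose proof lam_gt_mu.
  replace ((lamk - muk) * Rabs (Qf Mk (mc g) (md g))) with (Rabs ((muk - lamk) * Qf Mk (mc g) (md g))).
  2:{ rewrite Rabs_mult, Rabs_left by lra. ring. }
  rewrite <- Fform_conj by apply Mk_det. rewrite <- hk_conj, toR_hk.
  destruct g as [[[a b] c] d]. destruct Hg as [_ [_ [_ [[u Hu] [v Hv]]]]].
  unfold Fform, mc, md, Ak, Bk, Kr.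
  replace (2 * IZR k * (IZR c * IZR c) + (2 * IZR k + 1 - (4 * IZR k * IZR k - 2 * IZR k + 1)) * (IZR c * IZR d) - 4 * IZR k * IZR k * (IZR d * IZR d))
    with (IZR ((-2 * k) * (d * d + 2 * k * d * (d + c) - (d + c) * (d + c)))) by (repeat rewrite ?plus_IZR, ?minus_IZR, ?mult_IZR, ?opp_IZR; ring).
  rewrite <- abs_IZR. rewrite <- !mult_IZR. apply IZR_le.
  assert (Od : Z.Odd (d + c)) by (exists (u + v)%Z; lia). assert (Od2 : Z.Odd d) by (exists v; lia).
  assert (HK := Kf_ge k d (d + c) Hk Od2 Od).
  rewrite Z.abs_mul. nia.
Qed.

Lemma fam_Im g t : Gamma2 g -> snd (act g (curve Mk t)) <= / 2 + / (4 * Kr).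
Proof.
  intros Hg. pose proof Kr_ge1. pose proof lam_gt_mu.
  pose proof (orbit_curve_bound g Mk t Hg Mk_det) as H1. pose proof (fam_Q g Hg) as H2.
  set (Q := Rabs (Qf Mk (mc g) (md g))) in *. set (I := snd (act g (curve Mk t))) in *.
  assert (HI : 0 < I) by (apply (act_inH g _ Hg (curve_inH Mk t Mk_det))).
  assert (Hl : lamk - muk <= 4 * Kr * Kr + 2 * Kr).
  { unfold lamk, muk. replace ((tau + sqrt (tau * tau - 4)) / 2 - (tau - sqrt (tau * tau - 4)) / 2) with (sqrt (tau * tau - 4)) by field.
    rewrite <- (sqrt_square (4 * Kr * Kr + 2 * Kr)) by nra. apply sqrt_le_1_alt. unfold tau. nra. }
  assert (HQ : 0 < Q) by nra.
  assert (I <= (lamk - muk) / (8 * Kr * Kr)).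
  { apply Rmult_le_reg_r with (2 * Q); [lra|]. apply Rle_trans with 1; [lra|].
    apply Rmult_le_reg_l with (8 * Kr * Kr); [nra|]. field_simplify; nra. }
  apply Rle_trans with ((4 * Kr * Kr + 2 * Kr) / (8 * Kr * Kr)).
  - apply Rle_trans with ((lamk - muk) / (8 * Kr * Kr)); auto. apply Rmult_le_compat_r; auto. left; apply Rinv_0_lt_compat; nra.
  - right. field. lra.
Qed.

Lemma fam_height : height_e1 (curve Mk) <= / (2 * Kr).
Proof.
  pose proof Kr_ge1.
  assert (Hup : forall t, beta_e1 (curve Mk t) <= ln (2 * (/ 2 + / (4 * Kr)))).
  { intros t. apply beta_e1_le. apply curve_inH, Mk_det.
    assert (0 < / (4 * Kr)) by (apply Rinv_0_lt_compat; lra). lra.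
    intros h Hh. apply fam_Im; auto. }
  destruct (height_bounds (curve Mk) (beta_e1 (curve Mk 0)) _ 0 Hup (Rle_refl _)) as [_ H1].
  eapply Rle_trans; [exact H1|].
  replace (2 * (/ 2 + / (4 * Kr))) with (1 + / (2 * Kr)) by (field; lra).
  apply ln_1p_le. left. apply Rinv_0_lt_compat; lra.
Qed.

End Fam.

Definition M0 : rmat := (1, 0, 1, 1).
Lemma M0_det : rdet M0 = 1.
Proof. unfold rdet, M0; ring. Qed.

Definition c0 := curve M0.

Lemma c0_simple : simple_line c0.
Proof.
  intros s t g Hg Heq.
  unfold c0 in Heq. rewrite act_curve in Heq; auto using M0_det.
  set (P := rmul (adj M0) (rmul (toR g) M0)).
  assert (HP : mob P (0, exp t) = (0, exp s)).
  { unfold P. rewrite mob_comp; [| rewrite rdet_adj; apply M0_det | rewrite rdet_mul, rdet_toR, M0_det; auto; ring | apply (ray_inH t)].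
    rewrite <- Heq. unfold curve. apply mob_cancel. rewrite rdet_adj; apply M0_det. apply M0_det. apply adj_l, M0_det. apply (ray_inH s). }
  destruct g as [[[a b] c] d]. pose proof Hg as Hg'. destruct Hg' as [Hdet [Oa [Eb [Ec Od]]]].
  set (al := (a + b)%Z). set (be := b). set (ga := (c + d - a - b)%Z). set (de := (d - b)%Z).
  assert (HPe : P = (IZR al, IZR be, IZR ga, IZR de)).
  { unfold P, adj, M0, rmul, toR, ma, mb, mc, md, al, be, ga, de. 
    f_equal; [f_equal; [f_equal|]|]; repeat rewrite ?plus_IZR, ?minus_IZR, ?mult_IZR, ?opp_IZR; ring. }
  rewrite HPe in HP. unfold mob in HP; cbn [fst snd] in HP.
  pose proof (f_equal fst HP) as R0. pose proof (f_equal snd HP) as I0. cbn [fst snd] in R0, I0.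
  assert (Hdet' : (al * de - be * ga = 1)%Z) by (unfold al, be, ga, de; nia).
  assert (Oal : Z.Odd al) by (destruct Oa as [u Hu]; destruct Eb as [v Hv]; exists (u + v)%Z; unfold al; lia).
  assert (Ebe : Z.Even be) by exact Eb.
  assert (Ega : Z.Even ga) by (destruct Oa as [u Hu]; destruct Eb as [v Hv]; destruct Ec as [w Hw]; destruct Od as [z Hz]; exists (w + z - u - v)%Z; unfold ga; lia).
  assert (Ode : Z.Odd de) by (destruct Eb as [v Hv]; destruct Od as [z Hz]; exists (z - v)%Z; unfold de; lia).
  assert (Hnz : IZR ga <> 0 \/ IZR de <> 0) by (right; apply eq_IZR_contrapositive; destruct Ode; lia).
  pose proof (exp_pos t) as Ht.
  assert (Hden : 0 < (IZR ga * 0 + IZR de) ^ 2 + (IZR ga * exp t) ^ 2) by (apply den_pos; auto).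
  assert (Req : IZR be * IZR de + IZR al * IZR ga * (exp t * exp t) = 0).
  { assert (K : ((IZR al * 0 + IZR be) * (IZR ga * 0 + IZR de) + IZR al * IZR ga * exp t ^ 2) * / ((IZR ga * 0 + IZR de) ^ 2 + (IZR ga * exp t) ^ 2) = 0) by exact R0.
    apply Rmult_integral in K. destruct K as [K|K].
    - rewrite <- K. ring.
    - exfalso. revert K. apply Rinv_neq_0_compat. lra. }
  assert (Hga : ga = 0%Z).
  { destruct (Z.eq_dec ga 0) as [h|h]; auto. exfalso.
    assert (Hag : IZR al * IZR ga <> 0).
    { apply Rmult_integral_contrapositive; split; apply eq_IZR_contrapositive; [destruct Oal; lia | auto]. }
    apply (Z_simple_aux al be ga de); auto.
    apply lt_IZR. rewrite !mult_IZR. 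
    assert (IZR be * IZR de = - (IZR al * IZR ga) * (exp t * exp t)) by lra.
    rewrite H. assert (0 < (IZR al * IZR ga) * (IZR al * IZR ga)) by nra.
    assert (0 < ((IZR al * IZR ga) * (IZR al * IZR ga)) * (exp t * exp t)) by (apply Rmult_lt_0_compat; nra).
    replace (- (IZR al * IZR ga) * (exp t * exp t) * (IZR al * IZR ga)) with (- (((IZR al * IZR ga) * (IZR al * IZR ga)) * (exp t * exp t))) by ring. lra. }
  assert (Hbe : be = 0%Z).
  { rewrite Hga in Req. simpl in Req. assert (IZR be * IZR de = 0) by lra.
    apply Rmult_integral in H. destruct H as [H|H]; apply eq_IZR in H; auto. destruct Ode; lia. }
  assert (Hde : (de * de = 1)%Z).
  { rewrite Hga, Hbe in Hdet'. assert (al * de = 1)%Z by lia. rewrite Z.mul_comm in H.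
    destruct (Z.mul_eq_1 _ _ H) as [-> | ->]; lia. }
  rewrite Hga in I0. apply (f_equal IZR) in Hde. rewrite mult_IZR in Hde.
  replace ((0 * 0 + IZR de) ^ 2 + (0 * exp t) ^ 2) with 1 in I0 by (simpl; nra).
  apply exp_inv. lra.
Qed.

Lemma cont_lim (f : R -> R) x : ex_derive f x -> is_lim f x (f x).
Proof.
  intros H. apply is_lim_continuity. apply continuity_pt_filterlim. exact (@ex_derive_continuous R_AbsRing R_NormedModule f x H).
Qed.

Lemma lim_exp_opp : is_lim (fun t => exp (- t)) p_infty 0.
Proof.
  apply (is_lim_comp exp (fun t => - t) p_infty 0 m_infty).
  - apply is_lim_exp_m.
  - replace m_infty with (Rbar_opp p_infty) by reflexivity. apply is_lim_opp, is_lim_id.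
  - exists 0. intros; discriminate.
Qed.

Lemma c0_fst t : fst (c0 t) = exp t * exp t / (1 + exp t * exp t).
Proof. unfold c0, curve, M0, mob; cbn [fst snd]. field_simplify; [reflexivity| |]; pose proof (exp_pos t); nra. Qed.
Lemma c0_snd t : snd (c0 t) = exp t / (1 + exp t * exp t).
Proof. unfold c0, curve, M0, mob; cbn [fst snd]. f_equal. ring. Qed.

Lemma c0_e2 : to_e2 c0 m_infty.
Proof.
  exists gid. split; [apply Gamma2_id|]. unfold tends_to_bd, gid, mb, md.
  replace (IZR 0 / IZR 1) with 0 by (simpl; field).
  split.
  - eapply is_lim_ext. intros y; symmetry; apply c0_fst.
    set (f := fun u => u * u / (1 + u * u)).
    replace (Finite 0) with (Finite (f 0)) by (unfold f; f_equal; field).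
    apply is_lim_ext with (fun y => f (exp y)). intros; unfold f; reflexivity.
    apply (is_lim_comp f exp m_infty (f 0) 0).
    + apply cont_lim. unfold f. auto_derive. nra.
    + apply is_lim_exp_m.
    + exists 0. intros y _ h. injection h as h. pose proof (exp_pos y). lra.
  - eapply is_lim_ext. intros y; symmetry; apply c0_snd.
    set (f := fun u => u / (1 + u * u)).
    replace (Finite 0) with (Finite (f 0)) by (unfold f; f_equal; field).
    apply is_lim_ext with (fun y => f (exp y)). intros; unfold f; reflexivity.
    apply (is_lim_comp f exp m_infty (f 0) 0).
    + apply cont_lim. unfold f. auto_derive. nra.
    + apply is_lim_exp_m.
    + exists 0. intros y _ h. injection h as h. pose proof (exp_pos y). lra.
Qed.

Lemma c0_e3 : to_e3 c0 p_infty.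
Proof.
  exists gid. split; [apply Gamma2_id|]. unfold tends_to_bd, gid, ma, mb, mc, md.
  replace ((IZR 1 + IZR 0) / (IZR 0 + IZR 1)) with 1 by (simpl; field).
  split.
  - set (f := fun v => 1 / (v * v + 1)).
    apply is_lim_ext with (fun y => f (exp (- y))).
    { intros y. rewrite c0_fst. unfold f. rewrite exp_Ropp. pose proof (exp_pos y). field. split; nra. }
    replace (Finite 1) with (Finite (f 0)) by (unfold f; f_equal; field).
    apply (is_lim_comp f (fun y => exp (- y)) p_infty (f 0) 0).
    + apply cont_lim. unfold f. auto_derive. nra.
    + apply lim_exp_opp.
    + exists 0. intros y _ h. injection h as h. pose proof (exp_pos (- y)). lra.
  - set (f := fun v => v / (v * v + 1)).
    apply is_lim_ext with (fun y => f (exp (- y))).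
    { intros y. rewrite c0_snd. unfold f. rewrite exp_Ropp. pose proof (exp_pos y). field. split; nra. }
    replace (Finite 0) with (Finite (f 0)) by (unfold f; f_equal; field).
    apply (is_lim_comp f (fun y => exp (- y)) p_infty (f 0) 0).
    + apply cont_lim. unfold f. auto_derive. nra.
    + apply lim_exp_opp.
    + exists 0. intros y _ h. injection h as h. pose proof (exp_pos (- y)). lra.
Qed.

Lemma act_gid p : inH p -> act gid p = p.
Proof. intros Hp. rewrite act_mob. apply mob_id; auto. Qed.

Lemma c0_height : height_e1 c0 = 0.
Proof.
  assert (Hup : forall t, beta_e1 (c0 t) <= ln (2 * / 2)).
  { intros t. apply beta_e1_le. apply curve_inH, M0_det. lra.
    intros h Hh. pose proof (orbit_curve_bound h M0 t Hh M0_det) as H1.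
    assert (HQ : 1 <= Rabs (Qf M0 (mc h) (md h))).
    { destruct h as [[[a b] c] d]. destruct Hh as [_ [_ [_ [[u Hu] [v Hv]]]]].
      unfold Qf, M0, mc, md. replace ((IZR c * 1 + IZR d * 1) * (IZR c * 0 + IZR d * 1)) with (IZR ((c + d) * d)) by (rewrite mult_IZR, plus_IZR; ring).
      rewrite <- abs_IZR. apply IZR_le. subst. nia. }
    fold c0 in H1. pose proof (act_inH h _ Hh (curve_inH M0 t M0_det)) as H2. unfold inH in H2. fold c0 in H2. nra. }
  assert (Hlo : ln (2 * snd (act gid (c0 0))) <= beta_e1 (c0 0)) by (apply beta_e1_ge; [apply curve_inH, M0_det | apply Gamma2_id]).
  destruct (height_bounds c0 _ _ 0 Hup Hlo) as [H1 H2].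
  rewrite act_gid in H1 by (apply curve_inH, M0_det). rewrite c0_snd, exp_0 in H1.
  replace (2 * (1 / (1 + 1 * 1))) with 1 in H1 by field. replace (2 * / 2) with 1 in H2 by field.
  rewrite ln_1 in H1, H2. lra.
Qed.

Lemma h2_zero : h2_M_e1 = 0.
Proof.
  unfold h2_M_e1.
  rewrite (is_glb_Rbar_unique _ (Finite 0)); [reflexivity|].
  split.
  - intros x [c [Hc ->]]. simpl. left. apply closed_height_pos; auto.
  - intros b Hb. destruct b as [b0| |]; simpl; auto.
    + destruct (Rle_or_lt b0 0) as [h|h]; auto. exfalso.
      destruct (archimed (/ b0)) as [Hu1 _].
      set (k := up (/ b0)).
      assert (Hb0 : 0 < / b0) by (apply Rinv_0_lt_compat; auto).
      assert (Hk : (1 <= k)%Z).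
      { fold k in Hu1. assert (Hk0 : 0 < IZR k) by lra. apply lt_IZR in Hk0. lia. }
      assert (Hmem : (fun h => exists c, closed_geodesic c /\ h = height_e1 c) (height_e1 (curve (Mk k)))).
      { exists (curve (Mk k)). split; auto. apply fam_closed; auto. }
      specialize (Hb _ Hmem). simpl in Hb.
      pose proof (fam_height k Hk) as Hh. unfold Kr in Hh. fold k in Hu1.
      assert (/ (2 * IZR k) < b0).
      { assert (0 < IZR k) by lra. apply Rmult_lt_reg_l with (2 * IZR k). lra.
        rewrite Rinv_r by lra. apply Rmult_lt_reg_l with (/ b0). auto.
        replace (/ b0 * (2 * IZR k * b0)) with (2 * IZR k) by (field; lra). lra. }
      lra.
    + assert (Hmem : (fun h => exists c, closed_geodesic c /\ h = height_e1 c) (height_e1 (curve (Mk 1)))).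
      { exists (curve (Mk 1)). split; auto. apply fam_closed; lia. }
      specialize (Hb _ Hmem). simpl in Hb. exact Hb.
Qed.

Theorem proposition4p1 :
  (forall c, closed_geodesic c -> height_e1 c <> h2_M_e1) /\
  (exists c, geodesic_line c /\ simple_line c /\
     to_e2 c m_infty /\ to_e3 c p_infty /\ height_e1 c = h2_M_e1).
Proof.
  rewrite h2_zero. split.
  - intros c Hc. pose proof (closed_height_pos c Hc). lra.
  - exists c0. split; [apply curve_geodesic, M0_det|]. split; [apply c0_simple|].
    split; [apply c0_e2|]. split; [apply c0_e3|]. apply c0_height.
Qed.
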